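(* Let $\mathfrak C$ be a monster model of a complete theory $T$. Let $\pi_1(\bar x,\bar y),\dots,\pi_n(\bar x,\bar y)$ be partial types without parameters, with $\bar x,\bar y$ short tuples of variables of the same length and sorts, let $\bar a$ be a tuple from $\mathfrak C$ corresponding to $\bar x$ (and $\bar y$), and let $\epsilon_1,\dots,\epsilon_n\in\{-1,1\}$. (i) $A_{\pi_1,\bar a}^{\epsilon_1}\cdots A_{\pi_n,\bar a}^{\epsilon_n}=\bigcap\{A_{\varphi_1,\bar a}^{\epsilon_1}\cdots A_{\varphi_n,\bar a}^{\epsilon_n}:\varphi_i(\bar x,\bar y)\text{ formulas with }\pi_1\vdash\varphi_1,\dots,\pi_n\vdash\varphi_n\}$. (ii) If $A_{\pi_1,\bar a}^{\epsilon_1}\cdots A_{\pi_n,\bar a}^{\epsilon_n}$ is contained in a relatively definable subset $A$ of $\mathrm{Aut}(\mathfrak C)$, then there are formulas $\varphi_i(\bar x,\bar y)$ implied by $\pi_i(\bar x,\bar y)$, $i=1,\dots,n$, such that $A_{\varphi_1,\bar a}^{\epsilon_1}\cdots A_{\varphi_n,\bar a}^{\epsilon_n}\subseteq A$.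
   Context: $\mathfrak C$ is $\kappa$-saturated and strongly $\kappa$-homogeneous ($\kappa$ large); short means of length $<\kappa$. For a partial type (or formula) $\pi(\bar x,\bar y)$ without parameters and a tuple $\bar a$ from $\mathfrak C$, $A_{\pi,\bar a}=\{\sigma\in\mathrm{Aut}(\mathfrak C):\mathfrak C\models\pi(\sigma(\bar a),\bar a)\}$. A relatively definable subset of $\mathrm{Aut}(\mathfrak C)$ is one of the form $\{\sigma\in\mathrm{Aut}(\mathfrak C):\mathfrak C\models\psi(\sigma(\bar d),\bar e)\}$ for a formula $\psi$ without parameters and tuples $\bar d,\bar e$ from $\mathfrak C$. $X^{1}=X$ and $X^{-1}=\{\sigma^{-1}:\sigma\in X\}$; products are taken in the group. *)

(* Defs.v *)
From Stdlib Require Import List.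
Import ListNotations.

Definition idx (n : nat) : Type := {i : nat | i < n}.

Record language := Language {
  sort : Type;
  fsym : Type;
  rsym : Type;
  farity : fsym -> nat;
  fargs : forall f, idx (farity f) -> sort;
  fout : fsym -> sort;
  rarity : rsym -> nat;
  rargs : forall r, idx (rarity r) -> sort }.
Arguments farity {l} f.
Arguments fargs {l} f i.
Arguments fout {l} f.
Arguments rarity {l} r.
Arguments rargs {l} r i.

Section Syntax.
Variable L : language.

Inductive term (X : sort L -> Type) : sort L -> Type :=
| tvar (s : sort L) : X s -> term X s
| tapp (f : fsym L) : (forall i : idx (farity f), term X (fargs f i)) -> term X (fout f).

(* variables of X plus one new variable of sort s *)
Definition ext (X : sort L -> Type) (s : sort L) : sort L -> Type :=
  fun s' => (X s' + (s = s'))%type.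

(* first-order formulas (without parameters) with free variables in X;
   the other connectives/quantifiers are abbreviations *)
Inductive formula : (sort L -> Type) -> Type :=
| frel (X : sort L -> Type) (r : rsym L) :
    (forall i : idx (rarity r), term X (rargs r i)) -> formula X
| feq (X : sort L -> Type) (s : sort L) : term X s -> term X s -> formula X
| fneg (X : sort L -> Type) : formula X -> formula X
| fand (X : sort L -> Type) : formula X -> formula X -> formula X
| fex (X : sort L -> Type) (s : sort L) : formula (ext X s) -> formula X.

Record structure := Structure {
  carrier : sort L -> Type;
  finterp : forall f, (forall i : idx (farity f), carrier (fargs f i)) -> carrier (fout f);
  rinterp : forall r, (forall i : idx (rarity r), carrier (rargs r i)) -> Prop }.

Variable M : structure.

Fixpoint eval (X : sort L -> Type) (env : forall s, X s -> carrier M s)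
  (s : sort L) (t : term X s) {struct t} : carrier M s :=
  match t with
  | tvar _ s x => env s x
  | tapp _ f args => finterp M f (fun i => eval X env _ (args i))
  end.
Arguments eval {X} env {s} t.

Definition extend (X : sort L -> Type) (env : forall s, X s -> carrier M s)
  (s : sort L) (m : carrier M s) : forall s', ext X s s' -> carrier M s' :=
  fun s' v => match v with
              | inl x => env s' x
              | inr e => eq_rect s (carrier M) m s' e
              end.
Arguments extend {X} env {s} m.

Fixpoint sat (X : sort L -> Type) (phi : formula X) {struct phi} :
  (forall s, X s -> carrier M s) -> Prop :=
  match phi in formula X0 return (forall s, X0 s -> carrier M s) -> Prop with
  | frel _ r args => fun env => rinterp M r (fun i => eval env (args i))
  | feq _ _ t u => fun env => eval env t = eval env u
  | fneg _ p => fun env => ~ sat _ p env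
  | fand _ p q => fun env => sat _ p env /\ sat _ q env
  | fex _ s p => fun env => exists m : carrier M s, sat _ p (extend env m)
  end.
Arguments sat {X} phi env.

Record aut := Aut {
  af : forall s, carrier M s -> carrier M s;
  ab : forall s, carrier M s -> carrier M s;
  af_ab : forall s m, af s (ab s m) = m;
  ab_af : forall s m, ab s (af s m) = m;
  af_fun : forall f (args : forall i : idx (farity f), carrier M (fargs f i)),
      af _ (finterp M f args) = finterp M f (fun i => af _ (args i));
  af_rel : forall r (args : forall i : idx (rarity r), carrier M (rargs r i)),
      rinterp M r (fun i => af _ (args i)) <-> rinterp M r args }.
Arguments af a {s} m.
Arguments ab a {s} m.

(* subsets of Aut(M) and the group operations on them;
   the group product is composition: (sigma tau)(m) = sigma (tau m) *)
Definition autset := aut -> Prop.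

Definition aset_id : autset := fun sigma => forall (s : sort L) (m : carrier M s), af sigma m = m.

Definition aset_mul (A B : autset) : autset := fun sigma =>
  exists tau rho, A tau /\ B rho /\
    forall (s : sort L) (m : carrier M s), af sigma m = af tau (af rho m).

Definition aset_inv (A : autset) : autset := fun sigma =>
  exists tau, A tau /\ forall (s : sort L) (m : carrier M s), af sigma m = ab tau m.

(* X^eps with eps = true meaning +1 and eps = false meaning -1 *)
Definition aset_pow (A : autset) (eps : bool) : autset :=
  if eps then A else aset_inv A.

Definition aset_prod (l : list (autset * bool)) : autset :=
  fold_right (fun p acc => aset_mul (aset_pow (fst p) (snd p)) acc) aset_id l.

(* variables xbar, ybar: two copies of a sorted tuple of variables indexed by I *)
Definition XY (I : Type) (sI : I -> sort L) : sort L -> Type :=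
  fun s => ({i : I | sI i = s} + {i : I | sI i = s})%type.
Arguments XY {I} sI s.

Definition pair_env (I : Type) (sI : I -> sort L)
  (b c : forall i, carrier M (sI i)) : forall s, XY sI s -> carrier M s :=
  fun s v => match v with
             | inl (exist _ i e) => eq_rect (sI i) (carrier M) (b i) s e
             | inr (exist _ i e) => eq_rect (sI i) (carrier M) (c i) s e
             end.
Arguments pair_env {I sI} b c s v.

Definition A_type (I : Type) (sI : I -> sort L) (a : forall i, carrier M (sI i))
  (pi : formula (XY sI) -> Prop) : autset := fun sigma =>
  forall phi, pi phi -> sat phi (pair_env (fun i => af sigma (a i)) a).

Definition A_form (I : Type) (sI : I -> sort L) (a : forall i, carrier M (sI i))
  (phi : formula (XY sI)) : autset := fun sigma =>
  sat phi (pair_env (fun i => af sigma (a i)) a).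

(* pi |- phi modulo T = Th(M) (T complete, M |= T): some finite part of pi
   implies phi in T, i.e. M |= forall xy (/\ l -> phi) *)
Definition entails (X : sort L -> Type) (pi : formula X -> Prop)
  (phi : formula X) : Prop :=
  exists l : list (formula X), (forall psi, In psi l -> pi psi) /\
    forall env, (forall psi, In psi l -> sat psi env) -> sat phi env.

Definition rel_definable (A : autset) : Prop :=
  exists (D E : sort L -> Type) (psi : formula (fun s => (D s + E s)%type))
         (d : forall s, D s -> carrier M s) (e : forall s, E s -> carrier M s),
    forall sigma, A sigma <->
      sat psi (fun s v => match v with
                          | inl x => af sigma (d s x)
                          | inr y => e s y
                          end).

(* cardinality strictly below kappa = |K| *)
Definition small (K A : Type) : Prop :=
  (exists f : A -> K, forall x y, f x = f y -> x = y) /\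
  ~ (exists g : K -> A, forall x y, g x = g y -> x = y).

Definition saturated (K : Type) : Prop :=
  forall (P : sort L -> Type) (b : forall s, P s -> carrier M s),
    small K {s : sort L & P s} ->
    forall (s0 : sort L) (Sigma : formula (ext P s0) -> Prop),
      (forall l : list (formula (ext P s0)), (forall psi, In psi l -> Sigma psi) ->
         exists m : carrier M s0, forall psi, In psi l -> sat psi (extend b m)) ->
      exists m : carrier M s0, forall psi, Sigma psi -> sat psi (extend b m).

Definition strongly_homogeneous (K : Type) : Prop :=
  forall (J : sort L -> Type), small K {s : sort L & J s} ->
    forall c d : forall s, J s -> carrier M s,
      (forall phi : formula J, sat phi c <-> sat phi d) ->
      exists sigma : aut, forall s j, af sigma (c s j) = d s j.

End Syntax.

Arguments term {L} X s.
Arguments tvar {L X} s x.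
Arguments tapp {L X} f args.
Arguments ext {L} X s s'.
Arguments formula {L} X.
Arguments frel {L X} r args.
Arguments feq {L X s} t u.
Arguments fneg {L X} phi.
Arguments fand {L X} phi psi.
Arguments fex {L X} s phi.
Arguments carrier {L} s s0.
Arguments finterp {L} s f _.
Arguments rinterp {L} s r _.
Arguments eval {L M X} env {s} t.
Arguments extend {L M X} env {s} m s' v.
Arguments sat {L M X} phi env.
Arguments aut {L} M.
Arguments af {L M} a {s} m.
Arguments ab {L M} a {s} m.
Arguments autset {L} M.
Arguments aset_id {L M} sigma.
Arguments aset_mul {L M} A B sigma.
Arguments aset_inv {L M} A sigma.
Arguments aset_pow {L M} A eps sigma.
Arguments aset_prod {L M} l sigma.
Arguments XY {L I} sI s.
Arguments pair_env {L M I sI} b c s v.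
Arguments A_type {L M I sI} a pi sigma.
Arguments A_form {L M I sI} a phi sigma.
Arguments entails {L} M {X} pi phi.
Arguments rel_definable {L M} A.
Arguments saturated {L} M K.
Arguments strongly_homogeneous {L} M K.

(* Main.v *)
Require Import Defs.
From Stdlib Require Import List Arith Lia Classical ClassicalEpsilon FunctionalExtensionality ProofIrrelevance.
Import ListNotations.

Section Syn.
Variable L : language.

Fixpoint tren {X Y : sort L -> Type} (f : forall s, X s -> Y s) {s} (t : term X s) : term Y s :=
  match t with
  | tvar s x => tvar s (f s x)
  | tapp g args => tapp g (fun i => tren f (args i))
  end.

Definition lift {X Y : sort L -> Type} {s} (f : forall s, X s -> Y s) : forall s', ext X s s' -> ext Y s s' :=
  fun s' v => match v with inl x => inl (f s' x) | inr e => inr e end.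

Fixpoint fren {X} (phi : formula X) : forall Y, (forall s, X s -> Y s) -> formula Y :=
  match phi in formula X0 return forall Y, (forall s, X0 s -> Y s) -> formula Y with
  | @frel _ X0 r args => fun Y f => frel r (fun i => tren f (args i))
  | @feq _ X0 _ t u => fun Y f => feq (tren f t) (tren f u)
  | @fneg _ X0 p => fun Y f => fneg (fren p Y f)
  | @fand _ X0 p q => fun Y f => fand (fren p Y f) (fren q Y f)
  | @fex _ X0 s p => fun Y f => fex s (fren p (ext Y s) (lift f))
  end.

Variable M : structure L.

Lemma eval_ren {X Y} (f : forall s, X s -> Y s) (env : forall s, Y s -> carrier M s) s (t : term X s) :
  eval env (tren f t) = eval (fun s x => env s (f s x)) t.
Proof.
  induction t as [s x|g args IH]; simpl; auto.
  f_equal. apply functional_extensionality_dep; intro i. apply IH.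
Qed.

Lemma extend_lift {X Y} s (f : forall s, X s -> Y s) (env : forall s, Y s -> carrier M s) (m : carrier M s) :
  (fun s' v => extend env m s' (lift f s' v)) = extend (fun s x => env s (f s x)) m.
Proof.
  apply functional_extensionality_dep; intro s'. apply functional_extensionality; intros [x|e]; reflexivity.
Qed.

Lemma sat_ren {X} (phi : formula X) : forall Y (f : forall s, X s -> Y s) (env : forall s, Y s -> carrier M s),
  sat (fren phi Y f) env <-> sat phi (fun s x => env s (f s x)).
Proof.
  induction phi as [X r args|X s t u|X p IH|X p IHp q IHq|X s p IH]; intros Y f env; simpl.
  - replace (fun i => eval env (tren f (args i))) with (fun i => eval (fun s x => env s (f s x)) (args i)).
    tauto. apply functional_extensionality_dep; intro i. symmetry; apply eval_ren.
  - rewrite !eval_ren. tauto.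
  - rewrite IH. tauto.
  - rewrite IHp, IHq. tauto.
  - split; intros [m Hm]; exists m.
    + rewrite IH in Hm. rewrite extend_lift in Hm. exact Hm.
    + rewrite IH. rewrite extend_lift. exact Hm.
Qed.


Lemma eval_aut (g : aut M) {X} (env : forall s, X s -> carrier M s) s (t : term X s) :
  eval (fun s x => af g (env s x)) t = af g (eval env t).
Proof.
  induction t as [s x|h args IH]; simpl; auto.
  rewrite af_fun. f_equal. apply functional_extensionality_dep; intro i. apply IH.
Qed.

Lemma extend_aut (g : aut M) {X} (env : forall s, X s -> carrier M s) s (m : carrier M s) :
  extend (fun s x => af g (env s x)) (af g m) = (fun s' v => af g (extend env m s' v)).
Proof.
  apply functional_extensionality_dep; intro s'. apply functional_extensionality; intros [x|e]; simpl; auto.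
  destruct e; reflexivity.
Qed.

Lemma sat_aut (g : aut M) {X} (phi : formula X) : forall (env : forall s, X s -> carrier M s),
  sat phi (fun s x => af g (env s x)) <-> sat phi env.
Proof.
  induction phi as [X r args|X s t u|X p IH|X p IHp q IHq|X s p IH]; intros env; simpl.
  - replace (fun i => eval (fun s x => af g (env s x)) (args i)) with (fun i => af g (eval env (args i))).
    apply af_rel. apply functional_extensionality_dep; intro i. symmetry; apply eval_aut.
  - rewrite !eval_aut. split; intro H; [|congruence].
    apply (f_equal (fun z => ab g z)) in H. rewrite !ab_af in H. exact H.
  - rewrite IH. tauto.
  - rewrite IHp, IHq. tauto.
  - split; intros [m Hm].
    + exists (ab g m). rewrite <- IH. rewrite <- extend_aut. rewrite af_ab. exact Hm.
    + exists (af g m). rewrite extend_aut. rewrite IH. exact Hm.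
Qed.

Definition all_idx (n : nat) : list (idx n) :=
  flat_map (fun k => match lt_dec k n with left h => [exist _ k h] | right _ => [] end) (seq 0 n).

Lemma all_idx_In n (i : idx n) : In i (all_idx n).
Proof.
  destruct i as [k h]. unfold all_idx. apply in_flat_map. exists k. split.
  - apply in_seq. lia.
  - destruct (lt_dec k n) as [h'|h']; [|lia]. left. f_equal. apply proof_irrelevance.
Qed.

(* strengthening: a formula only depends on finitely many variables *)
Definition domk {X Y : sort L -> Type} (k : forall s, X s -> option (Y s)) (F : list {s & X s}) :=
  forall s x, In (existT _ s x) F -> k s x <> None.
Definition agree {X Y : sort L -> Type} (k : forall s, X s -> option (Y s)) (F : list {s & X s})
  (envX : forall s, X s -> carrier M s) (envY : forall s, Y s -> carrier M s) :=
  forall s x y, In (existT _ s x) F -> k s x = Some y -> envX s x = envY s y.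

Lemma tstr {X} s (t : term X s) : exists F : list {s & X s},
  forall Y (k : forall s, X s -> option (Y s)), domk k F ->
  exists t' : term Y s, forall envY envX, agree k F envX envY -> eval envY t' = eval envX t.
Proof.
  induction t as [s x|h args IH].
  - exists [existT _ s x]. intros Y k Hd.
    specialize (Hd s x (or_introl eq_refl)).
    destruct (k s x) as [y|] eqn:E; [|congruence].
    exists (tvar s y). intros envY envX Ha. simpl. symmetry. apply (Ha s x y); auto. left; auto.
  - set (Fs := fun i => proj1_sig (constructive_indefinite_description _ (IH i))).
    assert (HF : forall i, forall Y (k : forall s, X s -> option (Y s)), domk k (Fs i) ->
      exists t' : term Y (fargs h i), forall envY envX, agree k (Fs i) envX envY -> eval envY t' = eval envX (args i)).
    { intro i. exact (proj2_sig (constructive_indefinite_description _ (IH i))). }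
    exists (flat_map Fs (all_idx _)). intros Y k Hd.
    assert (Hi : forall i, exists t' : term Y (fargs h i), forall envY envX, agree k (Fs i) envX envY -> eval envY t' = eval envX (args i)).
    { intro i. apply HF. intros s x Hx. apply Hd. apply in_flat_map. exists i. split; auto. apply all_idx_In. }
    exists (tapp h (fun i => proj1_sig (constructive_indefinite_description _ (Hi i)))).
    intros envY envX Ha. simpl. f_equal. apply functional_extensionality_dep; intro i.
    apply (proj2_sig (constructive_indefinite_description _ (Hi i))).
    intros s x y Hx Hk. apply (Ha s x y); auto. apply in_flat_map. exists i. split; auto. apply all_idx_In.
Qed.

Definition proj_inl {X : sort L -> Type} {s} (v : {s' & ext X s s'}) : list {s & X s} :=
  match v with existT _ s' (inl x) => [existT _ s' x] | existT _ s' (inr _) => [] end.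

Definition kext {X Y : sort L -> Type} s (k : forall s, X s -> option (Y s)) : forall s', ext X s s' -> option (ext Y s s') :=
  fun s' v => match v with inl x => option_map inl (k s' x) | inr e => Some (inr e) end.

Lemma fstr {X} (phi : formula X) : exists F : list {s & X s},
  forall Y (k : forall s, X s -> option (Y s)), domk k F ->
  exists phi' : formula Y, forall envY envX, agree k F envX envY -> (sat phi' envY <-> sat phi envX).
Proof.
  induction phi as [X r args|X s t u|X p IH|X p IHp q IHq|X s p IH].
  - assert (IH : forall i, exists F : list {s & X s},
      forall Y (k : forall s, X s -> option (Y s)), domk k F ->
      exists t' : term Y (rargs r i), forall envY envX, agree k F envX envY -> eval envY t' = eval envX (args i)).
    { intro i. apply tstr. }
    set (Fs := fun i => proj1_sig (constructive_indefinite_description _ (IH i))).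
    assert (HF : forall i, forall Y (k : forall s, X s -> option (Y s)), domk k (Fs i) ->
      exists t' : term Y (rargs r i), forall envY envX, agree k (Fs i) envX envY -> eval envY t' = eval envX (args i)).
    { intro i. exact (proj2_sig (constructive_indefinite_description _ (IH i))). }
    exists (flat_map Fs (all_idx _)). intros Y k Hd.
    assert (Hi : forall i, exists t' : term Y (rargs r i), forall envY envX, agree k (Fs i) envX envY -> eval envY t' = eval envX (args i)).
    { intro i. apply HF. intros s x Hx. apply Hd. apply in_flat_map. exists i. split; auto. apply all_idx_In. }
    exists (frel r (fun i => proj1_sig (constructive_indefinite_description _ (Hi i)))).
    intros envY envX Ha. simpl.
    replace (fun i => eval envY (proj1_sig (constructive_indefinite_description _ (Hi i)))) with
      (fun i => eval envX (args i)). tauto.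
    apply functional_extensionality_dep; intro i. symmetry.
    apply (proj2_sig (constructive_indefinite_description _ (Hi i))).
    intros s x y Hx Hk. apply (Ha s x y); auto. apply in_flat_map. exists i. split; auto. apply all_idx_In.
  - destruct (tstr s t) as [Ft Ht]. destruct (tstr s u) as [Fu Hu].
    exists (Ft ++ Fu). intros Y k Hd.
    destruct (Ht Y k) as [t' Ht']. { intros s0 x Hx. apply Hd. apply in_or_app; auto. }
    destruct (Hu Y k) as [u' Hu']. { intros s0 x Hx. apply Hd. apply in_or_app; auto. }
    exists (feq t' u'). intros envY envX Ha. simpl.
    rewrite (Ht' envY envX), (Hu' envY envX). tauto.
    all: intros s0 x y Hx; apply Ha; apply in_or_app; auto.
  - destruct IH as [F HF]. exists F. intros Y k Hd. destruct (HF Y k Hd) as [p' Hp'].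
    exists (fneg p'). intros envY envX Ha. simpl. rewrite (Hp' _ _ Ha). tauto.
  - destruct IHp as [Fp HFp]. destruct IHq as [Fq HFq]. exists (Fp ++ Fq). intros Y k Hd.
    destruct (HFp Y k) as [p' Hp']. { intros s0 x Hx. apply Hd. apply in_or_app; auto. }
    destruct (HFq Y k) as [q' Hq']. { intros s0 x Hx. apply Hd. apply in_or_app; auto. }
    exists (fand p' q'). intros envY envX Ha. simpl. rewrite (Hp' envY envX), (Hq' envY envX). tauto.
    all: intros s0 x y Hx; apply Ha; apply in_or_app; auto.
  - destruct IH as [F HF]. exists (flat_map proj_inl F). intros Y k Hd.
    destruct (HF (ext Y s) (kext s k)) as [p' Hp'].
    { intros s' [x|e] Hx; simpl.
      - specialize (Hd s' x). destruct (k s' x); simpl; [congruence|].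
        exfalso; apply Hd; auto. apply in_flat_map. exists (existT _ s' (inl x)). simpl; auto.
      - congruence. }
    exists (fex s p'). intros envY envX Ha. simpl.
    assert (Hm : forall m, agree (kext s k) F (extend envX m) (extend envY m)).
    { intros m s' [x|e] y Hx Hk; simpl in Hk.
      - destruct (k s' x) as [y0|] eqn:E; simpl in Hk; [|congruence]. inversion Hk; subst; simpl.
        apply (Ha s' x y0); auto. apply in_flat_map. exists (existT _ s' (inl x)). simpl; auto.
      - inversion Hk; subst; simpl. reflexivity. }
    split; intros [m Hm']; exists m; [rewrite <- (Hp' _ _ (Hm m)) | rewrite (Hp' _ _ (Hm m))]; auto.
Qed.

Lemma support {X} (phi : formula X) : exists F : list {s & X s},
  forall env1 env2 : forall s, X s -> carrier M s,
  (forall s x, In (existT _ s x) F -> env1 s x = env2 s x) -> (sat phi env1 <-> sat phi env2).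
Proof.
  destruct (fstr phi) as [F HF]. exists F. intros env1 env2 H.
  destruct (HF X (fun s x => Some x)) as [p' Hp']. { intros s x _; congruence. }
  rewrite <- (Hp' env1 env1). rewrite (Hp' env1 env2). tauto.
  - intros s x y Hx Hk. inversion Hk; subst. symmetry; auto.
  - intros s x y Hx Hk. inversion Hk; subst. auto.
Qed.

End Syn.

Arguments tren {L X Y} f {s} t.
Arguments fren {L X} phi Y f.

Section Cl.
Variable L : language.
Variable M : structure L.

Lemma excl {Z : sort L -> Type} (phi : formula Z) (G : list {s & Z s}) : forall (W : sort L -> Type)
  (k : forall s, Z s -> option (W s)),
  (forall s z, k s z = None -> In (existT _ s z) G) ->
  exists theta : formula W, forall envW : forall s, W s -> carrier M s,
    sat theta envW <-> exists envZ : forall s, Z s -> carrier M s,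
      (forall s z w, k s z = Some w -> envZ s z = envW s w) /\ sat phi envZ.
Proof.
  induction G as [|[s1 z1] G IH]; intros W k Hk.
  - assert (Ht : forall s z, exists w, k s z = Some w).
    { intros s z. destruct (k s z) as [w|] eqn:E; eauto. destruct (Hk s z E). }
    set (k' := fun s z => proj1_sig (constructive_indefinite_description _ (Ht s z))).
    assert (Hk' : forall s z, k s z = Some (k' s z)).
    { intros s z. exact (proj2_sig (constructive_indefinite_description _ (Ht s z))). }
    exists (fren phi W k'). intro envW. rewrite sat_ren. split.
    + intro H. exists (fun s x => envW s (k' s x)). split; auto.
      intros s z w E. rewrite Hk' in E. inversion E; auto.
    + intros [envZ [Ha Hs]].
      replace (fun s x => envW s (k' s x)) with envZ; auto.
      apply functional_extensionality_dep; intro s; apply functional_extensionality; intro z.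
      apply Ha. apply Hk'.
  - set (k1 := fun s (z : Z s) => match k s z with
                 | Some w => Some (inl w)
                 | None => match excluded_middle_informative (exists e : s1 = s, eq_rect s1 Z z1 s e = z) with
                           | left h => Some (inr (proj1_sig (constructive_indefinite_description _ h)) : ext W s1 s)
                           | right _ => None
                           end
                 end).
    destruct (IH (ext W s1) k1) as [th Hth].
    { intros s z E. unfold k1 in E. destruct (k s z) eqn:E1; [discriminate|].
      destruct (excluded_middle_informative _) as [h|h]; [discriminate|].
      destruct (Hk s z E1) as [E2|E2]; auto.
      exfalso. apply h. exists (projT1_eq E2). apply (projT2_eq E2). }
    exists (fex s1 th). intro envW. simpl. split.
    + intros [m Hm]. rewrite Hth in Hm. destruct Hm as [envZ [Ha Hs]].
      exists envZ. split; auto. intros s z w E. rewrite (Ha s z (inl w)); auto.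
      unfold k1. rewrite E. auto.
    + intros [envZ [Ha Hs]]. exists (envZ s1 z1). rewrite Hth. exists envZ. split; auto.
      intros s z w E. unfold k1 in E. destruct (k s z) as [w0|] eqn:E1.
      * inversion E; subst. simpl. auto.
      * destruct (excluded_middle_informative _) as [h|h]; [|discriminate].
        inversion E; subst. simpl.
        destruct (constructive_indefinite_description _ h) as [e He]. simpl.
        subst z. destruct e. reflexivity.
Qed.

End Cl.

Section BW.
Variable T : Type.
Variable le : T -> T -> Prop.
Hypothesis le_refl : forall x, le x x.
Hypothesis le_trans : forall x y z, le x y -> le y z -> le x z.
Hypothesis le_anti : forall x y, le x y -> le y x -> x = y.
Variable S : T -> Prop.
Definition chain (C : T -> Prop) := forall x y, C x -> C y -> le x y \/ le y x.
Variable sup : (T -> Prop) -> T.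
Hypothesis sup_ub : forall C, (forall x, C x -> S x) -> chain C -> forall x, C x -> le x (sup C).
Hypothesis sup_least : forall C, (forall x, C x -> S x) -> chain C -> forall u, (forall x, C x -> le x u) -> le (sup C) u.
Hypothesis sup_S : forall C, (forall x, C x -> S x) -> chain C -> S (sup C).
Variable f : T -> T.
Hypothesis f_S : forall x, S x -> S (f x).
Hypothesis f_infl : forall x, S x -> le x (f x).

Definition tower (x : T) := forall P : T -> Prop, (forall y, P y -> P (f y)) ->
  (forall C, (forall y, C y -> P y) -> chain C -> P (sup C)) -> P x.

Lemma tower_f x : tower x -> tower (f x).
Proof. intros H P Hf Hs. apply Hf. apply H; auto. Qed.
Lemma tower_sup C : (forall y, C y -> tower y) -> chain C -> tower (sup C).
Proof. intros H Hc P Hf Hs. apply Hs; auto. intros y Hy. apply H; auto. Qed.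
Lemma tower_S x : tower x -> S x.
Proof. intro H. apply H; auto. Qed.

Definition extreme c := tower c /\ forall x, tower x -> le x c -> x <> c -> le (f x) c.

Lemma extreme_A c : extreme c -> forall x, tower x -> le x c \/ le (f c) x.
Proof.
  intros [Tc Ec] x Tx.
  enough (tower x /\ (le x c \/ le (f c) x)) by tauto.
  apply Tx.
  - intros y [Ty [H|H]]; split; [now apply tower_f| |now apply tower_f|].
    + destruct (classic (y = c)) as [->|Hne]; [right; auto|left; auto].
    + right. apply le_trans with y; auto. apply f_infl, tower_S; auto.
  - intros C HC Hch. split.
    + apply tower_sup; auto. intros y Hy; apply HC; auto.
    + destruct (classic (exists y, C y /\ ~ le y c)) as [[y [Cy Hy]]|Hn].
      * right. destruct (HC y Cy) as [_ [H|H]]; [contradiction|].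
        apply le_trans with y; auto. apply sup_ub; auto. intros z Hz; apply tower_S, HC; auto.
      * left. apply sup_least; auto. intros z Hz; apply tower_S, HC; auto.
        intros z Hz. apply NNPP; intro H; apply Hn; eauto.
Qed.

Lemma all_extreme c0 : tower c0 -> extreme c0.
Proof.
  intro Tc0. apply Tc0.
  - intros y Ey. split; [apply tower_f, Ey|]. intros x Tx Hx Hne.
    destruct (extreme_A y Ey x Tx) as [H|H].
    + destruct (classic (x = y)) as [->|Hne']; auto.
      apply le_trans with y. apply Ey; auto. apply f_infl, tower_S, Ey.
    + exfalso; apply Hne; apply le_anti; auto.
  - intros C HC Hch.
    assert (CS : forall z, C z -> S z) by (intros z Hz; apply tower_S, HC; auto).
    split; [apply tower_sup; auto; intros z Hz; apply HC; auto|].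
    intros x Tx Hx Hne.
    destruct (classic (exists c, C c /\ ~ le (f c) x)) as [[c [Cc Hc]]|Hn].
    + destruct (extreme_A c (HC c Cc) x Tx) as [H|H]; [|contradiction].
      destruct (classic (x = c)) as [->|Hne'].
      * destruct (classic (exists c', C c' /\ ~ le c' c)) as [[c' [Cc' Hc']]|Hn'].
        -- destruct (extreme_A c' (HC c' Cc') c (proj1 (HC c Cc))) as [H'|H'].
           ++ apply le_trans with c'; [|apply sup_ub; auto].
              apply (proj2 (HC c' Cc')); [apply (proj1 (HC c Cc))|exact H'|].
              intro E; subst; apply Hc'; auto.
           ++ exfalso; apply Hc'. apply le_trans with (f c'); auto.
        -- exfalso; apply Hne. apply le_anti; auto. apply sup_least; auto.
           intros z Hz; apply NNPP; intro H'; apply Hn'; eauto.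
      * apply le_trans with c. apply (proj2 (HC c Cc)); auto. apply sup_ub; auto.
    + exfalso; apply Hne. apply le_anti; auto. apply sup_least; auto.
      intros z Hz. apply le_trans with (f z). apply f_infl, CS; auto.
      apply NNPP; intro H'; apply Hn; eauto.
Qed.

Lemma tower_chain : chain tower.
Proof.
  intros x c Tx Tc. destruct (extreme_A c (all_extreme c Tc) x Tx) as [H|H]; auto.
  right. apply le_trans with (f c); auto. apply f_infl, tower_S; auto.
Qed.

Theorem bourbaki_witt : exists x, S x /\ f x = x.
Proof.
  assert (TS : forall y, tower y -> S y) by apply tower_S.
  set (s := sup tower). assert (Ts : tower s) by (apply tower_sup; auto; apply tower_chain).
  exists s. split; auto. apply le_anti.
  - apply sup_ub; auto. apply tower_chain. apply tower_f; auto.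
  - apply f_infl; auto.
Qed.
End BW.

Arguments tren {L X Y} f {s} t.
Arguments fren {L X} phi Y f.
Arguments support {L M X} phi.
Arguments excl {L M Z} phi G W k.

Section MS.
Variable L : language.
Variable M : structure L.
Variables (V B : sort L -> Type) (bB : forall s, B s -> carrier M s).
Definition Zf s := (V s + B s)%type.
Definition envOf (envV : forall s, V s -> carrier M s) : forall s, Zf s -> carrier M s :=
  fun s z => match z with inl v => envV s v | inr b => bB s b end.
Variable p : formula Zf -> Prop.
Definition extby (c : forall s, V s -> option (carrier M s)) (envV : forall s, V s -> carrier M s) :=
  forall s v m, c s v = Some m -> envV s v = m.
Definition Good c := forall D, (forall phi, In phi D -> p phi) ->
  exists envV, extby c envV /\ forall phi, In phi D -> sat phi (envOf envV).
Definition lec (c d : forall s, V s -> option (carrier M s)) := forall s v m, c s v = Some m -> d s v = Some m.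

Definition conjf {X : sort L -> Type} (phi : formula X) (D : list (formula X)) := fold_right fand phi D.
Lemma sat_conjf {X : sort L -> Type} (phi : formula X) D (e : forall s, X s -> carrier M s) :
  sat (conjf phi D) e <-> sat phi e /\ forall psi, In psi D -> sat psi e.
Proof.
  induction D as [|a D IH]; simpl. firstorder. rewrite IH. firstorder; subst; auto.
Qed.

Variable K : Type.
Hypothesis hs : small K {s & Zf s}.
Hypothesis hsat : saturated M K.

Lemma step c s0 (v0 : V s0) : Good c -> c s0 v0 = None ->
  exists c', Good c' /\ lec c c' /\ c' s0 v0 <> None.
Proof.
  intros Gc Hv0.
  destruct (Gc [] ltac:(simpl; tauto)) as [env0 [He0 _]].
  set (bP := envOf env0).
  set (isv0 := fun s (v : V s) => exists e : s0 = s, eq_rect s0 V v0 s e = v).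
  set (kap := fun (F : list {s & Zf s}) s (z : Zf s) =>
     match z return option (ext Zf s0 s) with
     | inr b => Some (inl (inr b))
     | inl v => match c s v with
                | Some _ => Some (inl (inl v))
                | None => match excluded_middle_informative (isv0 s v) with
                          | left h => Some (inr (proj1_sig (constructive_indefinite_description _ h)))
                          | right _ => if excluded_middle_informative (In (existT _ s (inl v)) F)
                                       then None else Some (inl (inl v))
                          end
                end
     end).
  set (Sigma := fun theta : formula (ext Zf s0) => exists D, (forall phi, In phi D -> p phi) /\
     (forall m, sat theta (extend bP m) -> exists envV, extby c envV /\ envV s0 v0 = m /\
         forall phi, In phi D -> sat phi (envOf envV)) /\
     (forall envV, extby c envV -> (forall phi, In phi D -> sat phi (envOf envV)) ->
         sat theta (extend bP (envV s0 v0)))).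
  assert (KC : forall phi D', (forall psi, In psi (phi :: D') -> p psi) -> exists theta, Sigma theta /\
     forall m, sat theta (extend bP m) -> exists envV, extby c envV /\ envV s0 v0 = m /\
         forall psi, In psi (phi :: D') -> sat psi (envOf envV)).
  { intros phi D' HD.
    destruct (@support L M _ (conjf phi D')) as [F HF].
    destruct (@excl L M _ (conjf phi D') F (ext Zf s0) (kap F)) as [th Hth].
    { intros s [v|b] E; simpl in E; [|discriminate].
      destruct (c s v); [discriminate|].
      destruct (excluded_middle_informative _); [discriminate|].
      destruct (excluded_middle_informative _); [auto|discriminate]. }
    assert (P1 : forall m, sat th (extend bP m) -> exists envV, extby c envV /\ envV s0 v0 = m /\
         forall psi, In psi (phi :: D') -> sat psi (envOf envV)).
    { intros m Hm. rewrite Hth in Hm. destruct Hm as [envZ [Ha Hs]].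
      exists (fun s v => envZ s (inl v)).
      assert (EZ : envOf (fun s v => envZ s (inl v)) = envZ).
      { apply functional_extensionality_dep; intro s; apply functional_extensionality; intros [v|b]; auto.
        simpl. symmetry. rewrite (Ha s (inr b) (inl (inr b))); auto. }
      split; [|split].
      - intros s v m' E. rewrite (Ha s (inl v) (inl (inl v))). simpl. unfold bP; simpl. auto.
        simpl. rewrite E. auto.
      - assert (H0 : isv0 s0 v0) by (exists eq_refl; auto).
        destruct (constructive_indefinite_description _ H0) as [e He] eqn:Ee.
        rewrite (Ha s0 (inl v0) (inr e)). simpl.
        rewrite (proof_irrelevance _ e eq_refl). reflexivity.
        simpl. rewrite Hv0. destruct (excluded_middle_informative (isv0 s0 v0)) as [h|h]; [|contradiction].
        rewrite (proof_irrelevance _ h H0). rewrite Ee. reflexivity.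
      - rewrite EZ. intros psi Hpsi. apply sat_conjf in Hs. destruct Hs as [Hs1 Hs2].
        destruct Hpsi as [<-|Hpsi]; auto. }
    exists th. split; auto. exists (phi :: D'). split; [auto|split; [auto|]].
    intros envV Hext HsD.
    rewrite Hth.
    set (mm := envV s0 v0).
    exists (fun s z => match kap F s z with Some w => extend bP mm s w | None => envOf envV s z end).
    split.
    - intros s z w E. rewrite E. auto.
    - apply (HF (envOf envV)).
      + intros s z Hz. destruct z as [v|b]; simpl.
        * destruct (c s v) as [m'|] eqn:Ec.
          -- simpl. unfold bP; simpl. rewrite (He0 _ _ _ Ec). exact (Hext s v m' Ec).
          -- destruct (excluded_middle_informative (isv0 s v)) as [h|h].
             ++ destruct (constructive_indefinite_description _ h) as [e He]. simpl.
                subst v. unfold mm. destruct e. reflexivity.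
             ++ destruct (excluded_middle_informative _) as [h'|h']; [reflexivity|contradiction].
        * reflexivity.
      + apply sat_conjf. split; [apply HsD; left; auto|]. intros psi Hp; apply HsD; right; auto. }
  assert (FS : forall Th : list (formula (ext Zf s0)), (forall th, In th Th -> Sigma th) ->
     exists D, (forall phi, In phi D -> p phi) /\ forall th, In th Th -> forall envV, extby c envV ->
       (forall phi, In phi D -> sat phi (envOf envV)) -> sat th (extend bP (envV s0 v0))).
  { induction Th as [|th Th IH]; intros HTh.
    - exists []. split; simpl; tauto.
    - destruct IH as [D [HD1 HD2]]. intros; apply HTh; right; auto.
      destruct (HTh th (or_introl eq_refl)) as [D' [HD'1 [_ HD'3]]].
      exists (D ++ D'). split.
      + intros phi Hphi. apply in_app_or in Hphi. destruct Hphi; auto.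
      + intros th' [<-|Hth'] envV Hext Hs.
        * apply HD'3; auto. intros; apply Hs; apply in_or_app; auto.
        * apply HD2; auto. intros; apply Hs; apply in_or_app; auto. }
  destruct (hsat Zf bP hs s0 Sigma) as [m Hm].
  { intros Th HTh. destruct (FS Th HTh) as [D [HD1 HD2]].
    destruct (Gc D HD1) as [envV [Hext Hs]]. exists (envV s0 v0). intros th Hth.
    apply HD2; auto. }
  exists (fun s v => match excluded_middle_informative (isv0 s v) with
             | left h => Some (eq_rect s0 (carrier M) m s (proj1_sig (constructive_indefinite_description _ h)))
             | right _ => c s v end).
  split; [|split].
  - intros [|phi D'] HD.
    + exists (fun s v => match excluded_middle_informative (isv0 s v) with
             | left h => eq_rect s0 (carrier M) m s (proj1_sig (constructive_indefinite_description _ h))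
             | right _ => env0 s v end).
      split; [|simpl; tauto].
      intros s v x. destruct (excluded_middle_informative (isv0 s v)); intro E; [inversion E; auto|].
      apply He0; auto.
    + destruct (KC phi D' HD) as [th [Sth Hth]].
      destruct (Hth m (Hm th Sth)) as [envV [Hext [Hv Hs]]].
      exists envV. split; auto.
      intros s v x. destruct (excluded_middle_informative (isv0 s v)) as [h|h]; intro E.
      * destruct (constructive_indefinite_description _ h) as [e He]. simpl in E.
        injection E as <-. subst v. destruct e. simpl. exact Hv.
      * apply Hext; auto.
  - intros s v x E. destruct (excluded_middle_informative (isv0 s v)) as [h|h]; auto.
    destruct h as [e He]. subst v. destruct e. simpl in E. congruence.
  - destruct (excluded_middle_informative (isv0 s0 v0)) as [h|h]; [discriminate|].
    exfalso; apply h; exists eq_refl; auto.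
Qed.


Lemma supl (D : list (formula Zf)) : exists F : list {s & Zf s}, forall phi, In phi D ->
  forall e1 e2 : forall s, Zf s -> carrier M s,
  (forall s x, In (existT _ s x) F -> e1 s x = e2 s x) -> (sat phi e1 <-> sat phi e2).
Proof.
  induction D as [|phi D [F HF]].
  - exists []. simpl; tauto.
  - destruct (@support L M _ phi) as [F1 HF1]. exists (F1 ++ F).
    intros psi [<-|Hpsi] e1 e2 H.
    + apply HF1. intros; apply H; apply in_or_app; auto.
    + apply HF; auto. intros; apply H; apply in_or_app; auto.
Qed.

Theorem msat : (forall D, (forall phi, In phi D -> p phi) -> exists envV, forall phi, In phi D -> sat phi (envOf envV)) ->
  exists envV, forall phi, p phi -> sat phi (envOf envV).
Proof.
  intro Hfs.
  set (c0 := fun s (v : V s) => @None (carrier M s)).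
  assert (G0 : Good c0).
  { intros D HD. destruct (Hfs D HD) as [envV HV]. exists envV. split; auto. intros s v m E; discriminate. }
  set (sup := fun (C : (forall s, V s -> option (carrier M s)) -> Prop) s (v : V s) =>
     match excluded_middle_informative (exists m, exists c, C c /\ c s v = Some m) with
     | left h => Some (proj1_sig (constructive_indefinite_description _ h))
     | right _ => None end).
  assert (sup_some : forall C s v m, sup C s v = Some m -> exists c, C c /\ c s v = Some m).
  { intros C s v m E. unfold sup in E. destruct (excluded_middle_informative _) as [h|h]; [|discriminate].
    destruct (constructive_indefinite_description _ h) as [m' Hm']. simpl in E. inversion E; subst; auto. }
  assert (sup_ub : forall C, (forall x, C x -> Good x) -> chain _ lec C -> forall x, C x -> lec x (sup C)).
  { intros C _ Hch x Cx s v m E. unfold sup. destruct (excluded_middle_informative _) as [h|h].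
    - destruct (constructive_indefinite_description _ h) as [m' [c' [Cc' E']]]. simpl. f_equal.
      destruct (Hch x c' Cx Cc') as [H|H].
      + rewrite (H _ _ _ E) in E'. inversion E'; auto.
      + rewrite (H _ _ _ E') in E. inversion E; auto.
    - exfalso; apply h; eauto. }
  assert (sup_least : forall C, (forall x, C x -> Good x) -> chain _ lec C -> forall u, (forall x, C x -> lec x u) -> lec (sup C) u).
  { intros C _ _ u Hu s v m E. destruct (sup_some C s v m E) as [c [Cc Ec]]. apply (Hu c); auto. }
  assert (sup_S : forall C, (forall x, C x -> Good x) -> chain _ lec C -> Good (sup C)).
  { intros C HG Hch D HD.
    destruct (supl D) as [F HF].
    set (covers := fun (d : forall s, V s -> option (carrier M s)) (x : {s & Zf s}) =>
       match x with existT _ s (inl v) => forall m, sup C s v = Some m -> d s v = Some m | _ => True end).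
    assert (Cov : forall F : list {s & Zf s}, exists d, (d = c0 \/ C d) /\ forall x, In x F -> covers d x).
    { induction F0 as [|x F' [d [Hd Hcov]]].
      - exists c0. split; auto. simpl; tauto.
      - destruct x as [s [v|b]].
        2:{ exists d. split; auto. intros x [<-|Hx]; simpl; auto. }
        destruct (sup C s v) as [m|] eqn:Es.
        2:{ exists d. split; auto. intros x [<-|Hx]; simpl; auto. intros m E; congruence. }
        destruct (sup_some C s v m Es) as [c [Cc Ec]].
        destruct Hd as [->|Cd].
        + exists c. split; auto. intros x [<-|Hx]; simpl.
          * intros m' E. congruence.
          * specialize (Hcov x Hx). destruct x as [s' [v'|b']]; simpl in *; auto.
            intros m' E. specialize (Hcov m' E). discriminate.
        + destruct (Hch d c Cd Cc) as [H|H].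
          * exists c. split; auto. intros x [<-|Hx]; simpl.
            -- intros m' E. congruence.
            -- specialize (Hcov x Hx). destruct x as [s' [v'|b']]; simpl in *; auto.
          * exists d. split; auto. intros x [<-|Hx]; simpl; auto.
            intros m' E. rewrite Es in E. inversion E; subst. auto. }
    destruct (Cov F) as [d [Hd Hcov]].
    assert (Gd : Good d) by (destruct Hd as [->|Cd]; auto).
    destruct (Gd D HD) as [envV [Hext Hs]].
    exists (fun s v => match sup C s v with Some m => m | None => envV s v end). split.
    - intros s v m E. rewrite E. auto.
    - intros phi Hphi. rewrite (HF phi Hphi _ (envOf envV)); auto.
      intros s [v|b] Hx; simpl; auto.
      specialize (Hcov _ Hx). simpl in Hcov.
      destruct (sup C s v) as [m|] eqn:Es; auto. symmetry. apply Hext. apply Hcov; auto. }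
  assert (step_ex : forall c, Good c /\ (exists s v, c s v = None) ->
     exists c', Good c' /\ lec c c' /\ exists s v, c s v = None /\ c' s v <> None).
  { intros c [Gc [s [v Hv]]]. destruct (step c s v Gc Hv) as [c' [G' [L' N']]].
    exists c'. split; auto. split; auto. exists s, v. auto. }
  set (f := fun c => match excluded_middle_informative (Good c /\ exists s v, c s v = None) with
     | left h => proj1_sig (constructive_indefinite_description _ (step_ex c h))
     | right _ => c end).
  assert (lrefl : forall x, lec x x) by (intros x s v m; auto).
  assert (ltrans : forall x y z, lec x y -> lec y z -> lec x z) by (intros x y z H1 H2 s v m E; auto).
  assert (lanti : forall x y, lec x y -> lec y x -> x = y).
  { intros x y H1 H2. apply functional_extensionality_dep; intro s; apply functional_extensionality; intro v.
    destruct (x s v) as [m|] eqn:E1; [symmetry; apply H1; auto|].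
    destruct (y s v) as [m|] eqn:E2; auto. rewrite (H2 _ _ _ E2) in E1; discriminate. }
  assert (fS : forall x, Good x -> Good (f x)).
  { intros x Gx. unfold f. destruct (excluded_middle_informative _) as [h|h]; auto.
    exact (proj1 (proj2_sig (constructive_indefinite_description _ (step_ex x h)))). }
  assert (finfl : forall x, Good x -> lec x (f x)).
  { intros x Gx. unfold f. destruct (excluded_middle_informative _) as [h|h]; auto.
    exact (proj1 (proj2 (proj2_sig (constructive_indefinite_description _ (step_ex x h))))). }
  destruct (bourbaki_witt _ lec lrefl ltrans lanti Good sup sup_ub sup_least sup_S f fS finfl) as [c [Gc Fc]].
  assert (Tot : forall s v, c s v <> None).
    { intros s v Hn. unfold f in Fc. destruct (excluded_middle_informative _) as [h|h].
      - destruct (constructive_indefinite_description _ (step_ex c h)) as [c' [Gc' [Lc' [s' [v' [E1 E2]]]]]].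
        simpl in Fc. subst c'. contradiction.
      - apply h. split; eauto. }
    destruct (Gc [] ltac:(simpl; tauto)) as [env0 [He0 _]].
    exists env0. intros phi Hphi.
    destruct (Gc [phi] ltac:(intros psi [<-|[]]; auto)) as [env1 [He1 Hs1]].
    replace env0 with env1. apply Hs1; left; auto.
    apply functional_extensionality_dep; intro s; apply functional_extensionality; intro v.
    destruct (c s v) as [m|] eqn:E; [|exfalso; apply (Tot s v E)].
    rewrite (He0 _ _ _ E), (He1 _ _ _ E). auto.
Qed.

End MS.

Definition inj (A B : Type) := exists f : A -> B, forall x y, f x = f y -> x = y.

Lemma inj_refl A : inj A A.
Proof. exists (fun x => x); auto. Qed.
Lemma inj_trans A B C : inj A B -> inj B C -> inj A C.
Proof. intros [f Hf] [g Hg]. exists (fun x => g (f x)); auto. Qed.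
Lemma inj_sum A A' B B' : inj A A' -> inj B B' -> inj (A + B) (A' + B').
Proof.
  intros [f Hf] [g Hg]. exists (fun u => match u with inl a => inl (f a) | inr b => inr (g b) end).
  intros [a|b] [a'|b'] E; inversion E; f_equal; auto.
Qed.

Definition pos_of {X} (l : list X) (x : X) : nat :=
  match excluded_middle_informative (exists k, nth_error l k = Some x) with
  | left h => proj1_sig (constructive_indefinite_description _ h)
  | right _ => 0 end.
Lemma pos_of_spec {X} (l : list X) x : In x l -> nth_error l (pos_of l x) = Some x.
Proof.
  intro H. unfold pos_of. destruct (excluded_middle_informative _) as [h|h].
  - exact (proj2_sig (constructive_indefinite_description _ h)).
  - exfalso; apply h. apply In_nth_error; auto.
Qed.
Lemma pos_of_lt {X} (l : list X) x : In x l -> pos_of l x < length l.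
Proof. intro H. apply nth_error_Some. rewrite pos_of_spec; auto; discriminate. Qed.
Lemma pos_of_inj {X} (l : list X) x y : In x l -> In y l -> pos_of l x = pos_of l y -> x = y.
Proof. intros Hx Hy E. apply pos_of_spec in Hx. apply pos_of_spec in Hy. rewrite E in Hx. congruence. Qed.

Definition listable X := exists l : list X, forall x, In x l.

Lemma listable_nat X : listable X -> inj X nat.
Proof. intros [l Hl]. exists (pos_of l). intros x y. apply pos_of_inj; auto. Qed.

Lemma notDI_listable X : ~ inj nat X -> listable X.
Proof.
  intro HD. apply NNPP; intro HL.
  assert (H : forall l : list X, exists x, ~ In x l).
  { intro l. apply NNPP; intro H. apply HL. exists l. intro x. apply NNPP; intro H'. apply H; eauto. }
  set (nx := fun l => proj1_sig (constructive_indefinite_description _ (H l))).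
  assert (Hnx : forall l, ~ In (nx l) l) by (intro l; exact (proj2_sig (constructive_indefinite_description _ (H l)))).
  set (sq := fix sq n := match n with 0 => [] | S n => nx (sq n) :: sq n end).
  assert (Hin : forall m n, m < n -> In (nx (sq m)) (sq n)).
  { intros m n; induction n; intro Hmn; [lia|]. simpl.
    destruct (Nat.eq_dec m n) as [->|Hne]; [left; auto|right; apply IHn; lia]. }
  apply HD. exists (fun n => nx (sq n)). intros m n E.
  destruct (lt_eq_lt_dec m n) as [[H1|H1]|H1]; auto.
  - exfalso. apply (Hnx (sq n)). rewrite <- E. apply Hin; auto.
  - exfalso. apply (Hnx (sq m)). rewrite E. apply Hin; auto.
Qed.

Lemma nat2_nat : inj (nat + nat) nat.
Proof.
  exists (fun u => match u with inl a => 2 * a | inr b => 2 * b + 1 end).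
  intros [a|b] [a'|b'] E; f_equal; lia.
Qed.

Lemma idx_prod_nat N A : inj A nat -> inj (idx N * A) nat.
Proof.
  intros [g Hg]. exists (fun p => proj1_sig (fst p) + N * g (snd p)).
  intros [[k hk] a] [[k' hk'] a'] E; simpl in E.
  assert (k = k' /\ g a = g a') as [-> E2].
  { assert (H1 : (k + N * g a) mod N = k) by (rewrite Nat.mul_comm, Nat.Div0.mod_add; apply Nat.mod_small; auto).
    assert (H2 : (k' + N * g a') mod N = k') by (rewrite Nat.mul_comm, Nat.Div0.mod_add; apply Nat.mod_small; auto).
    assert (k = k') by congruence. subst. split; auto. nia. }
  apply Hg in E2. subst. f_equal. f_equal. apply proof_irrelevance.
Qed.

Section Double.
Variable X : Type.
Hypothesis DI : inj nat X.

Definition PT := (X + X -> option X)%type.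
Definition ple (h h' : PT) := forall u y, h u = Some y -> h' u = Some y.
Definition PS (h : PT) := (forall u u' y, h u = Some y -> h u' = Some y -> u = u') /\
  (forall x, h (inl x) = None <-> h (inr x) = None) /\ (forall u y, h u = Some y -> h (inl y) <> None).

Lemma double : inj (X + X) X.
Proof.
  destruct DI as [e0 He0].
  set (sup := fun (C : PT -> Prop) (u : X + X) =>
     match excluded_middle_informative (exists y, exists c, C c /\ c u = Some y) with
     | left h => Some (proj1_sig (constructive_indefinite_description _ h))
     | right _ => None end).
  assert (sup_some : forall C u y, sup C u = Some y -> exists c, C c /\ c u = Some y).
  { intros C u y E. unfold sup in E. destruct (excluded_middle_informative _) as [h|h]; [|discriminate].
    destruct (constructive_indefinite_description _ h) as [m' Hm']. simpl in E. inversion E; subst; auto. }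
  assert (sup_ub : forall C, (forall x, C x -> PS x) -> chain _ ple C -> forall x, C x -> ple x (sup C)).
  { intros C _ Hch x Cx u y E. unfold sup. destruct (excluded_middle_informative _) as [h|h].
    - destruct (constructive_indefinite_description _ h) as [m' [c' [Cc' E']]]. simpl. f_equal.
      destruct (Hch x c' Cx Cc') as [H|H].
      + rewrite (H _ _ E) in E'. inversion E'; auto.
      + rewrite (H _ _ E') in E. inversion E; auto.
    - exfalso; apply h; eauto. }
  assert (sup_least : forall C, (forall x, C x -> PS x) -> chain _ ple C -> forall u, (forall x, C x -> ple x u) -> ple (sup C) u).
  { intros C _ _ w Hw u y E. destruct (sup_some C u y E) as [c [Cc Ec]]. apply (Hw c); auto. }
  assert (sup_S : forall C, (forall x, C x -> PS x) -> chain _ ple C -> PS (sup C)).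
  { intros C HS Hch. split; [|split].
    - intros u u' y E E'. destruct (sup_some C u y E) as [c [Cc Ec]]. destruct (sup_some C u' y E') as [c' [Cc' Ec']].
      destruct (Hch c c' Cc Cc') as [H|H].
      + apply (proj1 (HS c' Cc') u u' y); auto.
      + apply (proj1 (HS c Cc) u u' y); auto.
    - intro x. split; intro E.
      + destruct (sup C (inr x)) as [y|] eqn:E'; auto. destruct (sup_some C _ y E') as [c [Cc Ec]].
        destruct (c (inl x)) as [y'|] eqn:E2.
        * rewrite (sup_ub C HS Hch c Cc _ _ E2) in E. discriminate.
        * apply (proj1 (proj2 (HS c Cc)) x) in E2. congruence.
      + destruct (sup C (inl x)) as [y|] eqn:E'; auto. destruct (sup_some C _ y E') as [c [Cc Ec]].
        destruct (c (inr x)) as [y'|] eqn:E2.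
        * rewrite (sup_ub C HS Hch c Cc _ _ E2) in E. discriminate.
        * apply (proj1 (proj2 (HS c Cc)) x) in E2. congruence.
    - intros u y E. destruct (sup_some C u y E) as [c [Cc Ec]].
      apply (proj2 (proj2 (HS c Cc))) in Ec. destruct (c (inl y)) as [y'|] eqn:E2; [|congruence].
      rewrite (sup_ub C HS Hch c Cc _ _ E2). discriminate. }
  assert (step_ex : forall h, PS h /\ (exists e : nat -> X, (forall a b, e a = e b -> a = b) /\ forall k, h (inl (e k)) = None) ->
     exists h', PS h' /\ ple h h' /\ exists x, h (inl x) = None /\ h' (inl x) <> None).
  { intros h [[Hi [Hd Him]] [e [He Hn]]].
    set (kof := fun x => match excluded_middle_informative (exists k, e k = x) with
                 | left q => Some (proj1_sig (constructive_indefinite_description _ q)) | right _ => None end).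
    assert (Hkof : forall x k, kof x = Some k <-> e k = x).
    { intros x k. unfold kof. destruct (excluded_middle_informative _) as [q|q].
      - destruct (constructive_indefinite_description _ q) as [k' Hk']. simpl. split; intro E.
        + inversion E; subst; auto.
        + f_equal. apply He. congruence.
      - split; intro E; [discriminate|]. exfalso; apply q; eauto. }
    set (h' := fun u => match h u with Some y => Some y | None =>
                match u with inl x => option_map (fun k => e (2 * k)) (kof x)
                           | inr x => option_map (fun k => e (2 * k + 1)) (kof x) end end).
    assert (Hold : forall u y, h u = Some y -> h (inl y) <> None) by exact Him.
    assert (Hnew : forall u y, h u = None -> h' u = Some y -> exists j, y = e j /\ h (inl y) = None).
    { intros u y E1 E2. unfold h' in E2. rewrite E1 in E2.
      destruct u as [x|x]; destruct (kof x) as [k|]; simpl in E2; inversion E2; subst; eauto. }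
    exists h'. split; [split; [|split]|split].
    - intros u u' y E E'. unfold h' in E, E'.
      destruct (h u) as [y1|] eqn:E1; destruct (h u') as [y2|] eqn:E2.
      + inversion E; inversion E'; subst. apply (Hi u u' y); auto.
      + exfalso. inversion E; subst y1. destruct (Hnew u' y E2) as [j [-> Hj]]. unfold h'; rewrite E2; auto.
        apply (Hold u (e j)); auto.
      + exfalso. inversion E'; subst y2. destruct (Hnew u y E1) as [j [-> Hj]]. unfold h'; rewrite E1; auto.
        apply (Hold u' (e j)); auto.
      + destruct u as [x|x]; destruct u' as [x'|x']; destruct (kof x) as [k|] eqn:K1; destruct (kof x') as [k'|] eqn:K2;
          simpl in E, E'; try discriminate; inversion E; inversion E'; subst;
          apply Hkof in K1; apply Hkof in K2; subst;
          match goal with H : e ?a = e ?b |- _ => apply He in H end; f_equal; f_equal; lia.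
    - intro x. unfold h'. split; intro E.
      + destruct (h (inl x)) eqn:E1; [discriminate|]. rewrite (proj1 (Hd x) E1).
        destruct (kof x); simpl in *; congruence.
      + destruct (h (inr x)) eqn:E1; [discriminate|]. rewrite (proj2 (Hd x) E1).
        destruct (kof x); simpl in *; congruence.
    - intros u y E. destruct (h u) as [y1|] eqn:E1.
      + unfold h' in E. rewrite E1 in E. inversion E; subst. unfold h'.
        destruct (h (inl y)) eqn:E3; [discriminate|]. exfalso; apply (Hold u y); auto.
      + destruct (Hnew u y E1 E) as [j [-> Hj]]. unfold h'. rewrite Hj.
        assert (kof (e j) = Some j) by (apply Hkof; auto). rewrite H. simpl. discriminate.
    - intros u y E. unfold h'. rewrite E. auto.
    - exists (e 0). split; auto. unfold h'. rewrite Hn.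
      assert (kof (e 0) = Some 0) by (apply Hkof; auto). rewrite H. simpl. discriminate. }
  set (f := fun h => match excluded_middle_informative (PS h /\ exists e : nat -> X, (forall a b, e a = e b -> a = b) /\ forall k, h (inl (e k)) = None) with
     | left q => proj1_sig (constructive_indefinite_description _ (step_ex h q))
     | right _ => h end).
  assert (lrefl : forall x, ple x x) by (intros x u y; auto).
  assert (ltrans : forall x y z, ple x y -> ple y z -> ple x z) by (intros x y z H1 H2 u w E; auto).
  assert (lanti : forall x y, ple x y -> ple y x -> x = y).
  { intros x y H1 H2. apply functional_extensionality; intro u.
    destruct (x u) as [m|] eqn:E1; [symmetry; apply H1; auto|].
    destruct (y u) as [m|] eqn:E2; auto. rewrite (H2 _ _ E2) in E1; discriminate. }
  assert (fS : forall x, PS x -> PS (f x)).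
  { intros x Gx. unfold f. destruct (excluded_middle_informative _) as [q|q]; auto.
    exact (proj1 (proj2_sig (constructive_indefinite_description _ (step_ex x q)))). }
  assert (finfl : forall x, PS x -> ple x (f x)).
  { intros x Gx. unfold f. destruct (excluded_middle_informative _) as [q|q]; auto.
    exact (proj1 (proj2 (proj2_sig (constructive_indefinite_description _ (step_ex x q))))). }
  destruct (bourbaki_witt _ ple lrefl ltrans lanti PS sup sup_ub sup_least sup_S f fS finfl) as [h [Sh Fh]].
  assert (NoE : ~ exists e : nat -> X, (forall a b, e a = e b -> a = b) /\ forall k, h (inl (e k)) = None).
  { intro He. unfold f in Fh. destruct (excluded_middle_informative _) as [q|q].
    - destruct (constructive_indefinite_description _ (step_ex h q)) as [h' [S' [L' [x [E1 E2]]]]].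
      simpl in Fh. subst h'. contradiction.
    - apply q. split; auto. }
  destruct (notDI_listable {x : X | h (inl x) = None}) as [Lr HLr].
  { intros [g Hg]. apply NoE. exists (fun n => proj1_sig (g n)). split.
    - intros a b E. apply Hg. apply eq_sig_hprop; auto. intros; apply proof_irrelevance.
    - intro k. exact (proj2_sig (g k)). }
  set (Lx := map (@proj1_sig _ _) Lr).
  assert (HLx : forall x, h (inl x) = None -> In x Lx).
  { intros x Hx. unfold Lx. change x with (proj1_sig (exist (fun x => h (inl x) = None) x Hx)). apply in_map; auto. }
  set (N := length Lx).
  set (kof := fun x => match excluded_middle_informative (exists k, e0 k = x) with
                 | left q => Some (proj1_sig (constructive_indefinite_description _ q)) | right _ => None end).
  assert (Hkof : forall x k, kof x = Some k <-> e0 k = x).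
  { intros x k. unfold kof. destruct (excluded_middle_informative _) as [q|q].
    - destruct (constructive_indefinite_description _ q) as [k' Hk']. simpl. split; intro E.
      + inversion E; subst; auto.
      + f_equal. apply He0. congruence.
    - split; intro E; [discriminate|]. exfalso; apply q; eauto. }
  assert (Hkof2 : forall x, kof x = None -> forall k, e0 k <> x).
  { intros x E k E2. apply Hkof in E2. congruence. }
  set (hotel := fun y => match kof y with Some k => e0 (k + 2 * N) | None => y end).
  assert (hotel_inj : forall y y', hotel y = hotel y' -> y = y').
  { intros y y'. unfold hotel. destruct (kof y) as [k|] eqn:K1; destruct (kof y') as [k'|] eqn:K2; intro E.
    - apply He0 in E. apply Hkof in K1; apply Hkof in K2. subst. f_equal. lia.
    - exfalso. apply (Hkof2 y' K2 (k + 2 * N)); auto.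
    - exfalso. apply (Hkof2 y K1 (k' + 2 * N)); auto.
    - auto. }
  assert (hotel_big : forall y j, j < 2 * N -> hotel y <> e0 j).
  { intros y j Hj. unfold hotel. destruct (kof y) as [k|] eqn:K1; intro E.
    - apply He0 in E. lia.
    - apply (Hkof2 y K1 j); auto. }
  set (bit := fun u : X + X => match u with inl _ => 0 | inr _ => 1 end).
  set (base := fun u : X + X => match u with inl x => x | inr x => x end).
  exists (fun u => match h u with Some y => hotel y | None => e0 (2 * pos_of Lx (base u) + bit u) end).
  assert (Hdom : forall u, h u = None -> In (base u) Lx).
  { intros [x|x] E; simpl; apply HLx; auto. apply (proj2 (proj1 (proj2 Sh) x)); auto. }
  assert (Hlt : forall u, h u = None -> 2 * pos_of Lx (base u) + bit u < 2 * N).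
  { intros u E. pose proof (pos_of_lt Lx _ (Hdom u E)). unfold N. unfold bit, base in *. destruct u; simpl in *; lia. }
  intros u u' E. destruct (h u) as [y|] eqn:E1; destruct (h u') as [y'|] eqn:E2.
  - apply hotel_inj in E. subst. apply (proj1 Sh u u' y'); auto.
  - exfalso. apply (hotel_big y _ (Hlt u' E2)); auto.
  - exfalso. apply (hotel_big y' _ (Hlt u E1)); auto.
  - apply He0 in E. assert (bit u = bit u' /\ pos_of Lx (base u) = pos_of Lx (base u')) as [B1 B2].
    { unfold bit, base in *. destruct u; destruct u'; simpl in *; split; lia. }
    apply pos_of_inj in B2; try apply Hdom; auto.
    unfold bit, base in *. destruct u; destruct u'; simpl in *; try discriminate; subst; auto.
Qed.
End Double.

Lemma idx_step N I : inj (idx (S N) * I) (I + idx N * I).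
Proof.
  exists (fun p => match lt_dec (proj1_sig (fst p)) N with
           | left h' => inr (exist _ (proj1_sig (fst p)) h', snd p)
           | right _ => inl (snd p) end).
  intros [[k hk] i] [[k' hk'] i']; simpl.
  destruct (lt_dec k N) as [h1|h1]; destruct (lt_dec k' N) as [h2|h2]; intro E; inversion E; subst.
  - f_equal. f_equal. apply proof_irrelevance.
  - assert (k = k') by lia. subst. f_equal. f_equal. apply proof_irrelevance.
Qed.

Lemma idx_prod_I N I : inj nat I -> inj (idx N * I) I.
Proof.
  intro DI. induction N.
  - exists snd. intros [[k hk] i]; lia.
  - eapply inj_trans. apply idx_step. eapply inj_trans. apply inj_sum. apply inj_refl. apply IHN.
    apply double; auto.
Qed.

Lemma small_of (K A I Z : Type) N : small K (A + nat) -> small K I -> inj Z (idx N * I + nat) -> small K Z.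
Proof.
  intros [hK1 hK2] [hI1 hI2] HZ.
  assert (natK : inj nat K) by (eapply inj_trans; [|exact hK1]; exists inr; intros x y E; inversion E; auto).
  assert (notKnat : ~ inj K nat) by (intro H; apply hK2; eapply inj_trans; [exact H|]; exists inr; intros x y E; inversion E; auto).
  destruct (classic (inj nat I)) as [DI|nDI].
  - assert (ZI : inj Z I).
    { eapply inj_trans; [exact HZ|]. eapply inj_trans. apply inj_sum. apply idx_prod_I; auto. exact DI.
      apply double; auto. }
    split. eapply inj_trans; eauto. intro H. apply hI2. eapply inj_trans; eauto.
  - assert (Inat : inj I nat) by (apply listable_nat, notDI_listable; auto).
    assert (Znat : inj Z nat).
    { eapply inj_trans; [exact HZ|]. eapply inj_trans; [|apply nat2_nat]. apply inj_sum.
      apply idx_prod_nat; auto. apply inj_refl. }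
    split. eapply inj_trans; eauto. intro H. apply notKnat. eapply inj_trans; eauto.
Qed.

Section AutG.
Variable L : language.
Variable M : structure L.

Definition aut_id : aut M.
Proof.
  refine (@Aut L M (fun s m => m) (fun s m => m) _ _ _ _); intros; try reflexivity; tauto.
Defined.

Definition aut_comp (g h : aut M) : aut M.
Proof.
  refine (@Aut L M (fun s m => af g (af h m)) (fun s m => ab h (ab g m)) _ _ _ _).
  - intros s m. rewrite !af_ab. reflexivity.
  - intros s m. rewrite !ab_af. reflexivity.
  - intros f args. rewrite !af_fun. reflexivity.
  - intros r args. rewrite (af_rel _ _ g r (fun i => af h (args i))). apply af_rel.
Defined.

Definition aut_inv (g : aut M) : aut M.
Proof.
  refine (@Aut L M (fun s m => ab g m) (fun s m => af g m) _ _ _ _).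
  - intros s m. apply ab_af.
  - intros s m. apply af_ab.
  - intros f args. pose proof (f_equal (fun z => ab g z) (af_fun _ _ g f (fun i => ab g (args i)))) as H.
    simpl in H. rewrite ab_af in H. rewrite H. f_equal. f_equal. apply functional_extensionality_dep; intro i. symmetry; apply af_ab.
  - intros r args. rewrite <- (af_rel _ _ g r (fun i => ab g (args i))).
    replace (fun i => af g (ab g (args i))) with args; [tauto|].
    apply functional_extensionality_dep; intro i. symmetry; apply af_ab.
Defined.

Variables (I : Type) (sI : I -> sort L) (a : forall i, carrier M (sI i)).
Definition Tup := forall i, carrier M (sI i).
Definition gt (g : aut M) (x : Tup) : Tup := fun i => af g (x i).

Lemma gt_comp g h x : gt (aut_comp g h) x = gt g (gt h x).
Proof. reflexivity. Qed.
Lemma gt_inv g x : gt (aut_inv g) (gt g x) = x.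
Proof. apply functional_extensionality_dep; intro i. apply ab_af. Qed.
Lemma gt_inv' g x : gt g (gt (aut_inv g) x) = x.
Proof. apply functional_extensionality_dep; intro i. apply af_ab. Qed.

Variables (Y : Type) (Qof : Y -> Tup -> Tup -> Prop) (sgn : Y -> bool).
Hypothesis Qinv : forall y g x z, Qof y (gt g x) (gt g z) <-> Qof y x z.

Definition prodQ (lq : list Y) : autset M :=
  aset_prod (map (fun q => ((fun t : aut M => Qof q (gt t a) a) : autset M, sgn q)) lq).

Definition rel (q : Y) (x z : Tup) := if sgn q then Qof q z x else Qof q x z.
Lemma rel_inv q g x z : rel q (gt g x) (gt g z) <-> rel q x z.
Proof. unfold rel. destruct (sgn q); apply Qinv. Qed.

Definition ChainP (lq : list Y) (c : nat -> Tup) :=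
  c 0 = a /\ (forall k, k <= length lq -> exists g, c k = gt g a) /\
  (forall k q, nth_error lq k = Some q -> rel q (c k) (c (S k))).

Lemma pow_char q (t : aut M) : aset_pow (fun t => Qof q (gt t a) a) (sgn q) t <-> rel q a (gt t a).
Proof.
  unfold aset_pow, rel. destruct (sgn q).
  - tauto.
  - split.
    + intros [t0 [H1 H2]].
      replace (gt t a) with (gt (aut_inv t0) a).
      rewrite <- (Qinv q t0). rewrite gt_inv'. exact H1.
      apply functional_extensionality_dep; intro i. unfold gt. simpl. symmetry; apply H2.
    + intro H. exists (aut_inv t). split.
      * rewrite <- (Qinv q t). rewrite gt_inv'. exact H.
      * intros; reflexivity.
Qed.

Lemma chain_fwd lq : forall s, prodQ lq s -> exists c, ChainP lq c /\ c (length lq) = gt s a.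
Proof.
  induction lq as [|q rest IH]; intros s Hs.
  - exists (fun _ => a). split; [split; [auto|split]|].
    + intros k _. exists aut_id. reflexivity.
    + intros k q E. destruct k; discriminate.
    + simpl. apply functional_extensionality_dep; intro i. unfold gt. symmetry. apply Hs.
  - destruct Hs as [t [r [Ht [Hr Hs]]]].
    destruct (IH r Hr) as [c' [[C0 [Cg Cr]] Cl]].
    exists (fun k => match k with 0 => a | S k' => gt t (c' k') end). split; [split; [auto|split]|].
    + intros [|k] Hk. exists aut_id; reflexivity.
      destruct (Cg k ltac:(simpl in Hk; lia)) as [h Hh]. exists (aut_comp t h). rewrite Hh. reflexivity.
    + intros [|k] q' E; simpl in E.
      * inversion E; subst q'. rewrite C0. apply (pow_char q t). exact Ht.
      * rewrite rel_inv. apply Cr; auto.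
    + simpl. rewrite Cl. apply functional_extensionality_dep; intro i. unfold gt. symmetry. apply Hs.
Qed.

Lemma chain_bwd lq : lq <> [] -> forall s c, ChainP lq c -> c (length lq) = gt s a -> prodQ lq s.
Proof.
  induction lq as [|q rest IH]; intros Hne s c [C0 [Cg Cr]] Cl; [congruence|].
  destruct rest as [|q2 rest'].
  - simpl in Cl. exists s, aut_id. split; [|split; [|intros; reflexivity]].
    + apply pow_char. rewrite <- Cl, <- C0. apply Cr. reflexivity.
    + unfold prodQ; simpl. intros s0 m; reflexivity.
  - destruct (Cg 1 ltac:(simpl; lia)) as [g Hg].
    exists g, (aut_comp (aut_inv g) s). split; [|split].
    + apply pow_char. rewrite <- Hg, <- C0. apply Cr. reflexivity.
    + apply (IH ltac:(discriminate) _ (fun k => gt (aut_inv g) (c (S k)))).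
      * split; [|split].
        -- simpl. rewrite Hg. apply gt_inv.
        -- intros k Hk. destruct (Cg (S k) ltac:(simpl in *; lia)) as [h Hh]. exists (aut_comp (aut_inv g) h).
           rewrite Hh. reflexivity.
        -- intros k q' E. rewrite rel_inv. apply Cr. simpl. exact E.
      * simpl in Cl |- *. rewrite Cl. reflexivity.
    + intros s0 m. simpl. rewrite af_ab. reflexivity.
Qed.

End AutG.

Arguments fren {L X} phi Y f.

Section GC.
Variable L : language.
Variable M : structure L.
Variable K : Type.
Hypothesis hsat : saturated M K.
Hypothesis hhom : strongly_homogeneous M K.
Variables (I : Type) (sI : I -> sort L).
Hypothesis hI : small K I.
Variable a : forall i, carrier M (sI i).
Variable l : list ((formula (XY sI) -> Prop) * bool).

Local Notation Tup := (Tup L M I sI).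
Definition JI s := {i : I | sI i = s}.
Definition tup_env (x : Tup) : forall s, JI s -> carrier M s :=
  fun s w => match w with exist _ i e => eq_rect (sI i) (carrier M) (x i) s e end.

Definition nn := length l.
Definition CV s := {p : idx nn * I | sI (snd p) = s}.
Variables (W Bx : sort L -> Type) (bx : forall s, Bx s -> carrier M s).
Definition Vv s := (CV s + W s)%type.
Definition Bv s := (JI s + Bx s)%type.
Definition bB : forall s, Bv s -> carrier M s :=
  fun s u => match u with inl w => tup_env a s w | inr x => bx s x end.
Local Notation Z := (Zf L Vv Bv).
Local Notation envO := (envOf L M Vv Bv bB).

Definition cv (j : nat) : forall s, JI s -> Z s :=
  fun s w => match w with exist _ i e =>
    match j with
    | 0 => inr (inl (exist _ i e))
    | S j' => match lt_dec j' nn with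
              | left h => inl (inl (exist (fun p : idx nn * I => sI (snd p) = s) (exist _ j' h, i) e))
              | right _ => inr (inl (exist _ i e))
              end
    end end.

Definition pv (j1 j2 : nat) : forall s, XY sI s -> Z s :=
  fun s v => match v with inl w => cv j1 s w | inr w => cv j2 s w end.

Definition ctup (envV : forall s, Vv s -> carrier M s) (j : nat) : Tup :=
  fun i => envO envV (sI i) (cv j (sI i) (exist _ i eq_refl)).

Lemma env_cv envV j : (fun s w => envO envV s (cv j s w)) = tup_env (ctup envV j).
Proof.
  apply functional_extensionality_dep; intro s; apply functional_extensionality; intros [i e].
  destruct e. reflexivity.
Qed.

Lemma env_pv envV j1 j2 : (fun s v => envO envV s (pv j1 j2 s v)) = pair_env (ctup envV j1) (ctup envV j2).
Proof.
  apply functional_extensionality_dep; intro s; apply functional_extensionality; intros [[i e]|[i e]];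
  destruct e; reflexivity.
Qed.

Lemma ctup0 envV : ctup envV 0 = a.
Proof. reflexivity. Qed.

Definition mkenv (c : nat -> Tup) (wenv : forall s, W s -> carrier M s) : forall s, Vv s -> carrier M s :=
  fun s v => match v with
             | inl (exist _ (exist _ k h, i) e) => eq_rect (sI i) (carrier M) (c (S k) i) s e
             | inr x => wenv s x end.

Lemma ctup_mk c wenv k : k < nn -> ctup (mkenv c wenv) (S k) = c (S k).
Proof.
  intro Hk. apply functional_extensionality_dep; intro i. unfold ctup, cv. simpl.
  destruct (lt_dec k nn); [reflexivity|contradiction].
Qed.

Lemma tup_env_gt g x : tup_env (gt L M I sI g x) = fun s w => af g (tup_env x s w).
Proof.
  apply functional_extensionality_dep; intro s; apply functional_extensionality; intros [i e].
  destruct e. reflexivity.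
Qed.

Lemma pair_env_gt g x y : pair_env (gt L M I sI g x) (gt L M I sI g y) = fun s v => af g (pair_env x y s v).
Proof.
  apply functional_extensionality_dep; intro s; apply functional_extensionality; intros [[i e]|[i e]];
  destruct e; reflexivity.
Qed.

Definition Qpi (q : (formula (XY sI) -> Prop) * bool) (x y : Tup) := forall phi, fst q phi -> sat phi (pair_env x y).
Definition Qphi (q : ((formula (XY sI) -> Prop) * bool) * formula (XY sI)) (x y : Tup) := sat (snd q) (pair_env x y).
Definition sgnpi (q : (formula (XY sI) -> Prop) * bool) := snd q.
Definition sgnphi (q : ((formula (XY sI) -> Prop) * bool) * formula (XY sI)) := snd (fst q).

Lemma Qpi_inv : forall y g x z, Qpi y (gt L M I sI g x) (gt L M I sI g z) <-> Qpi y x z.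
Proof.
  intros y g x z. unfold Qpi. rewrite pair_env_gt. split; intros H phi Hp; specialize (H phi Hp);
  [rewrite sat_aut in H|rewrite sat_aut]; auto.
Qed.
Lemma Qphi_inv : forall y g x z, Qphi y (gt L M I sI g x) (gt L M I sI g z) <-> Qphi y x z.
Proof. intros y g x z. unfold Qphi. rewrite pair_env_gt. apply sat_aut. Qed.

Definition dflt : (formula (XY sI) -> Prop) * bool := (fun _ => False, true).
Definition T2ren k (psi : formula (XY sI)) : formula Z :=
  fren psi Z (if snd (nth k l dflt) then pv (S k) k else pv k (S k)).

Variable Theta : formula Z -> Prop.
Definition ptype (d : formula Z) :=
  (exists k phi, k < nn /\ sat phi (tup_env a) /\ d = fren phi Z (cv (S k))) \/
  (exists k psi, k < nn /\ fst (nth k l dflt) psi /\ d = T2ren k psi) \/ Theta d.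

Lemma Forall2_seq {A B} (R : A -> B -> Prop) (f : nat -> B) : forall (lq : list A) j,
  (forall k x, nth_error lq k = Some x -> R x (f (j + k))) -> Forall2 R lq (map f (seq j (length lq))).
Proof.
  induction lq as [|x lq IH]; intros j H; simpl; constructor.
  - specialize (H 0 x eq_refl). rewrite Nat.add_0_r in H. auto.
  - apply IH. intros k y E. replace (S j + k) with (j + S k) by lia. apply (H (S k)); auto.
Qed.

Lemma nth_combine_seq {A B} (f : nat -> B) : forall (lq : list A) j k x,
  nth_error lq k = Some x -> nth_error (combine lq (map f (seq j (length lq)))) k = Some (x, f (j + k)).
Proof.
  induction lq as [|y lq IH]; intros j k x E; [destruct k; discriminate|].
  destruct k; simpl in *.
  - inversion E; subst. rewrite Nat.add_0_r. auto.
  - rewrite (IH (S j) k x E). f_equal. f_equal. f_equal. lia.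
Qed.

Lemma length_combine_seq {A B} (f : nat -> B) (lq : list A) j : length (combine lq (map f (seq j (length lq)))) = length lq.
Proof. rewrite length_combine, length_map, length_seq. lia. Qed.

Lemma small_down X Y : small K X -> inj Y X -> small K Y.
Proof.
  intros [H1 H2] HY. split. eapply inj_trans; eauto. intro H. apply H2. eapply inj_trans; eauto.
Qed.

Lemma JI_inj : inj {s & JI s} I.
Proof.
  exists (fun p : {s & JI s} => proj1_sig (projT2 p : JI (projT1 p))). intros [s [i e]] [s' [i' e']]; simpl. intro E. subst i'.
  destruct e, e'. reflexivity.
Qed.

Lemma homog_tup (x : Tup) : (forall phi : formula JI, sat phi (tup_env a) -> sat phi (tup_env x)) ->
  exists g, x = gt L M I sI g a.
Proof.
  intro H. destruct (hhom JI (small_down _ _ hI JI_inj) (tup_env a) (tup_env x)) as [g Hg].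
  - intro phi. split; [apply H|]. intro H1. apply NNPP; intro H2. apply (H (fneg phi)) in H2. contradiction.
  - exists g. apply functional_extensionality_dep; intro i. symmetry. apply (Hg (sI i) (exist _ i eq_refl)).
Qed.

Hypothesis Hsmall : small K {s & Z s}.
Variable vt : formula (XY sI).
Hypothesis Hvt : forall env : forall s, XY sI s -> carrier M s, sat vt env.

Hypothesis Hfs : forall phis, Forall2 (fun p phi => entails M (fst p) phi) l phis ->
  forall Th0, (forall th, In th Th0 -> Theta th) ->
  exists c wenv, ChainP L M I sI a _ Qphi sgnphi (combine l phis) c /\
    forall th, In th Th0 -> sat th (envO (mkenv c wenv)).

Theorem genchain : exists envV, ChainP L M I sI a _ Qpi sgnpi l (ctup envV) /\
  forall th, Theta th -> sat th (envO envV).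
Proof.
  destruct (msat L M Vv Bv bB ptype K Hsmall hsat) as [envV HV].
  - intros D HD.
    set (Lk := fun k => flat_map (fun d => match excluded_middle_informative
              (exists psi, fst (nth k l dflt) psi /\ d = T2ren k psi) with
              | left h => [proj1_sig (constructive_indefinite_description _ h)]
              | right _ => [] end) D).
    assert (HLk : forall k psi, In psi (Lk k) -> fst (nth k l dflt) psi).
    { intros k psi Hin. apply in_flat_map in Hin. destruct Hin as [d [_ Hd]].
      destruct (excluded_middle_informative _) as [h|h]; [|destruct Hd].
      destruct Hd as [<-|[]]. exact (proj1 (proj2_sig (constructive_indefinite_description _ h))). }
    set (fk := fun k => conjf L vt (Lk k)).
    set (phis := map fk (seq 0 (length l))).
    set (Th0 := flat_map (fun d => if excluded_middle_informative (Theta d) then [d] else []) D).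
    destruct (Hfs phis) with (Th0 := Th0) as [c [wenv [[C0 [Cg Cr]] HTh]]].
    + apply Forall2_seq. intros k x E. simpl.
      assert (x = nth k l dflt) by (symmetry; apply nth_error_nth; auto). subst x.
      exists (Lk k). split; [apply HLk|]. intros env Henv. apply sat_conjf. split; auto.
    + intros th Hth. apply in_flat_map in Hth. destruct Hth as [d [_ Hd]].
      destruct (excluded_middle_informative _); [destruct Hd as [<-|[]]; auto|destruct Hd].
    + exists (mkenv c wenv). intros d Hd.
      assert (Hct : forall j, j <= nn -> ctup (mkenv c wenv) j = c j).
      { intros [|j] Hj; [rewrite ctup0; auto|]. apply ctup_mk; lia. }
      assert (Hlen : length (combine l phis) = nn) by apply length_combine_seq.
      destruct (HD d Hd) as [[k [phi [Hk [Hphi ->]]]]|[[k [psi [Hk [Hpsi ->]]]]|HT]].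
      * rewrite sat_ren, env_cv, Hct by lia. rewrite Hlen in Cg.
        destruct (Cg (S k) ltac:(lia)) as [g Hg]. rewrite Hg, tup_env_gt, sat_aut. exact Hphi.
      * assert (Hh : exists psi', fst (nth k l dflt) psi' /\ T2ren k psi = T2ren k psi') by eauto.
        set (psi' := proj1_sig (constructive_indefinite_description _ Hh)).
        assert (Hpsi' : In psi' (Lk k)).
        { apply in_flat_map. exists (T2ren k psi). split; auto.
          destruct (excluded_middle_informative _) as [h|h]; [|contradiction].
          rewrite (proof_irrelevance _ h Hh). left; auto. }
        rewrite (proj2 (proj2_sig (constructive_indefinite_description _ Hh))). fold psi'.
        assert (E : nth_error (combine l phis) k = Some (nth k l dflt, fk k)).
        { unfold phis. apply (nth_combine_seq fk l 0 k). apply nth_error_nth'. exact Hk. }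
        specialize (Cr k _ E). unfold rel, Qphi, sgnphi in Cr. simpl in Cr.
        unfold T2ren. destruct (snd (nth k l dflt));
          rewrite sat_ren, env_pv, !Hct by lia; apply (sat_conjf L M) in Cr; apply Cr; auto.
      * apply HTh. apply in_flat_map. exists d. split; auto.
        destruct (excluded_middle_informative _); [left; auto|contradiction].
  - exists envV. split.
    + split; [apply ctup0|split].
      * intros [|k] Hk. exists (aut_id L M). reflexivity.
        apply homog_tup. intros phi Hphi.
        assert (H1 : ptype (fren phi Z (cv (S k)))).
        { left. exists k, phi. split; [unfold nn; lia|split; auto]. }
        apply HV in H1. rewrite sat_ren, env_cv in H1. exact H1.
      * intros k q E.
        assert (Hk : k < nn) by (apply nth_error_Some; congruence).
        assert (q = nth k l dflt) by (symmetry; apply nth_error_nth; auto). subst q.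
        unfold rel, Qpi, sgnpi. destruct (snd (nth k l dflt)) eqn:Es; intros phi Hphi;
          (assert (H1 : ptype (T2ren k phi)) by (right; left; exists k, phi; auto));
          apply HV in H1; unfold T2ren in H1; rewrite Es in H1; rewrite sat_ren, env_pv in H1; exact H1.
    + intros th Hth. apply HV. right; right; auto.
Qed.
End GC.

Lemma lt_addr k a b : k < a -> k < a + b. Proof. lia. Qed.
Lemma lt_addl k a b : k < b -> a + k < a + b. Proof. lia. Qed.
Definition widenL a b (k : idx a) : idx (a + b) := exist _ (proj1_sig k) (lt_addr _ _ b (proj2_sig k)).
Definition shiftR a b (k : idx b) : idx (a + b) := exist _ (a + proj1_sig k) (lt_addl _ a _ (proj2_sig k)).

Lemma inj_add X Y a b I : inj X (idx a * I + nat) -> inj Y (idx b * I + nat) -> inj (X + Y) (idx (a + b) * I + nat).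
Proof.
  intros [f Hf] [g Hg].
  exists (fun u => match u with
    | inl x => match f x with inl (k, i) => inl (widenL a b k, i) | inr m => inr (2 * m) end
    | inr y => match g y with inl (k, i) => inl (shiftR a b k, i) | inr m => inr (2 * m + 1) end end).
  intros [x|y] [x'|y']; simpl.
  - destruct (f x) as [[[k hk] i]|m] eqn:E1; destruct (f x') as [[[k' hk'] i']|m'] eqn:E2; intro E; inversion E; subst.
    + f_equal. apply Hf. rewrite E1, E2. f_equal. f_equal. f_equal. apply proof_irrelevance.
    + f_equal. apply Hf. rewrite E1, E2. f_equal. lia.
  - destruct (f x) as [[[k hk] i]|m] eqn:E1; destruct (g y') as [[[k' hk'] i']|m'] eqn:E2; intro E; inversion E; subst.
    + lia.
    + lia.
  - destruct (g y) as [[[k hk] i]|m] eqn:E1; destruct (f x') as [[[k' hk'] i']|m'] eqn:E2; intro E; inversion E; subst.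
    + lia.
    + lia.
  - destruct (g y) as [[[k hk] i]|m] eqn:E1; destruct (g y') as [[[k' hk'] i']|m'] eqn:E2; intro E; inversion E; subst.
    + f_equal. apply Hg. rewrite E1, E2. assert (k = k') by lia. subst. f_equal. f_equal. f_equal. apply proof_irrelevance.
    + f_equal. apply Hg. rewrite E1, E2. f_equal. lia.
Qed.

Lemma inj_sigsum {S : Type} (A B : S -> Type) : inj {s & (A s + B s)%type} ({s & A s} + {s & B s}).
Proof.
  exists (fun p => match p with existT _ s (inl x) => inl (existT _ s x) | existT _ s (inr y) => inr (existT _ s y) end).
  intros p p' E.
  apply (f_equal (fun u : {s & A s} + {s & B s} => match u with
     | inl q => existT (fun s => (A s + B s)%type) (projT1 q) (inl (projT2 q))
     | inr q => existT (fun s => (A s + B s)%type) (projT1 q) (inr (projT2 q)) end)) in E.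
  destruct p as [s [x|y]]; destruct p' as [s' [x'|y']]; exact E.
Qed.

Lemma exist_lift {S : Type} (D : S -> Type) (Q : forall s, D s -> Prop) s s' (x : D s) (x' : D s')
  (h : Q s x) (h' : Q s' x') : existT D s x = existT D s' x' ->
  existT (fun s => {y : D s | Q s y}) s (exist _ x h) = existT _ s' (exist _ x' h').
Proof.
  intro H.
  enough (forall (p : {s & D s}) (hp : Q (projT1 p) (projT2 p)), existT D s x = p ->
    existT (fun s => {y : D s | Q s y}) s (exist _ x h) = existT _ (projT1 p) (exist _ (projT2 p) hp)) as Hx
    by exact (Hx (existT D s' x') h' H).
  intros p hp E. destruct E. simpl. f_equal. f_equal. apply proof_irrelevance.
Qed.

Lemma existT_inl {S : Type} (A B : S -> Type) s s' (x : A s) (x' : A s') :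
  existT (fun s => (A s + B s)%type) s (inl x) = existT _ s' (inl x') -> existT A s x = existT A s' x'.
Proof.
  intro H. apply (f_equal (fun p : {s & (A s + B s)%type} => match p with existT _ s (inl x) => Some (existT A s x) | _ => None end)) in H.
  simpl in H. inversion H. auto.
Qed.
Lemma existT_inr {S : Type} (A B : S -> Type) s s' (x : B s) (x' : B s') :
  existT (fun s => (A s + B s)%type) s (inr x) = existT _ s' (inr x') -> existT B s x = existT B s' x'.
Proof.
  intro H. apply (f_equal (fun p : {s & (A s + B s)%type} => match p with existT _ s (inr x) => Some (existT B s x) | _ => None end)) in H.
  simpl in H. inversion H. auto.
Qed.

Lemma inj_nat0 X I : inj X nat -> inj X (idx 0 * I + nat).
Proof. intros [f Hf]. exists (fun x => inr (f x)). intros x y E; inversion E; auto. Qed.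
Lemma inj_empty0 {S : Type} : inj {s : S & Empty_set} nat.
Proof. exists (fun _ => 0). intros [_ []]. Qed.

Section Main.
Variable L : language.
Variable M : structure L.
Variable K : Type.
Hypothesis hK : small K (sort L + fsym L + rsym L + nat)%type.
Hypothesis hsat : saturated M K.
Hypothesis hhom : strongly_homogeneous M K.
Variables (I : Type) (sI : I -> sort L).
Hypothesis hI : small K I.
Variable a : forall i, carrier M (sI i).
Variable l : list ((formula (XY sI) -> Prop) * bool).

Definition prodA := aset_prod (map (fun p => (A_type a (fst p), snd p)) l).
Definition prodF phis := aset_prod (map (fun q => (A_form a (snd q), snd (fst q))) (combine l phis)).

Lemma conv1 s : prodA s = prodQ L M I sI a _ (Qpi L M I sI) (sgnpi L I sI) l s.
Proof. reflexivity. Qed.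
Lemma conv2 phis s : prodF phis s = prodQ L M I sI a _ (Qphi L M I sI) (sgnphi L I sI) (combine l phis) s.
Proof. reflexivity. Qed.

Lemma mono : forall l0 phis, Forall2 (fun p phi => entails M (fst p) phi) l0 phis -> forall s,
  aset_prod (map (fun p => (A_type a (fst p), snd p)) l0) s ->
  aset_prod (map (fun q => (A_form a (snd q), snd (fst q))) (combine l0 phis)) s.
Proof.
  intros l0 phis HF. induction HF as [|p phi l0 phis Hp HF IH]; intros s Hs; [exact Hs|].
  destruct Hs as [t [r [Ht [Hr Hs]]]]. exists t, r. split; [|split; auto].
  destruct Hp as [Lp [HLp1 HLp2]].
  assert (Sub : forall t, A_type a (fst p) t -> A_form a phi t).
  { intros t0 H0. apply HLp2. intros psi Hpsi. apply H0, HLp1; auto. }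
  simpl in *. destruct (snd p); simpl in *; auto.
  destruct Ht as [t0 [H1 H2]]. exists t0. split; auto.
Qed.

Lemma inj_CV : inj {s & CV L I sI l s} (idx (nn L I sI l) * I + nat).
Proof.
  exists (fun p : {s & CV L I sI l s} => inl (proj1_sig (projT2 p : CV L I sI l (projT1 p)))).
  intros [s [pp e]] [s' [pp' e']] E; simpl in E. injection E as E. subst pp'. destruct e, e'. reflexivity.
Qed.

Lemma inj_JI : inj {s & JI L I sI s} (idx 1 * I + nat).
Proof.
  exists (fun p : {s & JI L I sI s} => inl (exist (fun k => k < 1) 0 Nat.lt_0_1, proj1_sig (projT2 p : JI L I sI (projT1 p)))).
  intros [s [i e]] [s' [i' e']] E; simpl in E. injection E as E. subst i'. destruct e, e'. reflexivity.
Qed.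

Lemma form_transfer {X Y : sort L -> Type} (phi : formula X) : exists phi' : formula Y, True.
Proof.
  destruct (classic (inhabited (sort L))) as [[s0]|Hs].
  - exists (fex s0 (feq (tvar (X:=ext Y s0) s0 (inr eq_refl)) (tvar s0 (inr eq_refl)))). auto.
  - exists (fren phi Y (fun s _ => False_rect _ (Hs (inhabits s)))). auto.
Qed.

Hypothesis Hne : l <> [].

Lemma nn_pos : exists k, nn L I sI l = S k.
Proof. unfold nn. destruct l; [congruence|]. simpl; eauto. Qed.

Lemma part_i_bwd s : (forall phis, Forall2 (fun p phi => entails M (fst p) phi) l phis -> prodF phis s) -> prodA s.
Proof.
  intro H. rewrite conv1.
  destruct nn_pos as [k Hk].
  destruct (classic (exists phi0 : formula (XY sI), True)) as [[phi0 _]|Hno].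
  2:{ apply (chain_bwd L M I sI a _ _ _ (Qpi_inv L M I sI) l Hne s (fun j => match j with 0 => a | _ => gt L M I sI s a end)).
      - split; [reflexivity|split].
        + intros [|j] _; [exists (aut_id L M); reflexivity|exists s; reflexivity].
        + intros j q E. unfold rel, Qpi. destruct (sgnpi L I sI q); intros phi _; exfalso; apply Hno; eauto.
      - unfold nn in Hk. rewrite Hk. reflexivity. }
  set (W := fun _ : sort L => Empty_set).
  set (Bx := JI L I sI).
  set (bx := tup_env L M I sI (gt L M I sI s a)).
  set (Z := Zf L (Vv L I sI l W) (Bv L I sI Bx)).
  set (Theta := fun th : formula Z => exists i, th =
     feq (tvar (sI i) (cv L I sI l W Bx (nn L I sI l) (sI i) (exist _ i eq_refl)))
         (tvar (sI i) (inr (inr (exist _ i eq_refl : JI L I sI (sI i))) : Z (sI i)))).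
  assert (Hsmall : small K {s & Z s}).
  { apply (small_of K _ I _ ((nn L I sI l + 0) + (1 + 1)) hK hI).
    eapply inj_trans. apply (inj_sigsum (Vv L I sI l W) (Bv L I sI Bx)). apply inj_add.
    - eapply inj_trans. apply (inj_sigsum (CV L I sI l) W). apply inj_add. apply inj_CV. apply inj_nat0, inj_empty0.
    - eapply inj_trans. apply (inj_sigsum (JI L I sI) Bx). apply inj_add; apply inj_JI. }
  destruct (genchain L M K hsat hhom I sI hI a l W Bx bx Theta Hsmall (fneg (fand phi0 (fneg phi0)))) as [envV [Hch HTh]].
  - intro env. simpl. tauto.
  - intros phis HF Th0 HTh0. specialize (H phis HF). rewrite conv2 in H.
    destruct (chain_fwd L M I sI a _ _ _ (Qphi_inv L M I sI) _ s H) as [c [Hc Hcl]].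
    exists c, (fun s (x : W s) => match x with end). split; auto.
    intros th Hth. destruct (HTh0 th Hth) as [i ->]. simpl.
    assert (Hlen : length (combine l phis) = nn L I sI l).
    { rewrite length_combine. apply Forall2_length in HF. rewrite <- HF. unfold nn. lia. }
    rewrite Hlen in Hcl.
    transitivity (ctup L M I sI a l W Bx bx (mkenv L M I sI l W c (fun s (x : W s) => match x with end)) (nn L I sI l) i).
    reflexivity. rewrite Hk in *. rewrite ctup_mk by lia. rewrite Hcl. reflexivity.
  - apply (chain_bwd L M I sI a _ _ _ (Qpi_inv L M I sI) l Hne s _ Hch).
    apply functional_extensionality_dep; intro i.
    specialize (HTh _ (ex_intro _ i eq_refl)). simpl in HTh. exact HTh.
Qed.


Lemma part_ii (A : autset M) : rel_definable A -> (forall s, prodA s -> A s) ->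
  exists phis, Forall2 (fun p phi => entails M (fst p) phi) l phis /\ (forall s, prodF phis s -> A s).
Proof.
  intros [D [E [psi [d [e HA]]]]] Hsub.
  destruct (fstr L M psi) as [F HF].
  set (Dp := fun s => {x : D s | In (existT (fun s => (D s + E s)%type) s (inl x)) F}).
  set (Ep := fun s => {y : E s | In (existT (fun s => (D s + E s)%type) s (inr y)) F}).
  set (kap := fun s (u : (D s + E s)%type) => match u return option (Dp s + Ep s) with
     | inl x => match excluded_middle_informative (In (existT (fun s => (D s + E s)%type) s (inl x)) F) with
                | left h => Some (inl (exist _ x h)) | right _ => None end
     | inr y => match excluded_middle_informative (In (existT (fun s => (D s + E s)%type) s (inr y)) F) with
                | left h => Some (inr (exist _ y h)) | right _ => None end end).
  destruct (HF (fun s => (Dp s + Ep s)%type) kap) as [psi' Hpsi'].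
  { intros s [x|y] Hu; simpl; destruct (excluded_middle_informative _); congruence. }
  set (envs := fun (g : aut M) s (u : (Dp s + Ep s)%type) => match u with
     | inl x => af g (d s (proj1_sig x)) | inr y => e s (proj1_sig y) end).
  assert (HAs : forall g, A g <-> sat psi' (envs g)).
  { intro g. rewrite HA. symmetry. apply Hpsi'.
    intros s [x|y] w Hu Hk; simpl in Hk; destruct (excluded_middle_informative _); inversion Hk; reflexivity. }
  apply NNPP; intro Hn.
  destruct (form_transfer (Y := XY sI) psi') as [phi0 _].
  destruct nn_pos as [k Hk].
  set (W := Dp). set (Bx := Ep).
  set (bx := fun s (y : Bx s) => e s (proj1_sig y)).
  set (Z := Zf L (Vv L I sI l W) (Bv L I sI Bx)).
  set (JD := fun s => (JI L I sI s + Dp s)%type).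
  set (envad := fun s (u : JD s) => match u with inl w => tup_env L M I sI a s w | inr x => d s (proj1_sig x) end).
  set (mapJD := fun s (u : JD s) => match u return Z s with
     | inl w => cv L I sI l W Bx (nn L I sI l) s w | inr x => inl (inr x) end).
  set (mapDE := fun s (u : (Dp s + Ep s)%type) => match u return Z s with
     | inl x => inl (inr x) | inr y => inr (inr y) end).
  set (Theta := fun th : formula Z => (exists chi : formula JD, sat chi envad /\ th = fren chi Z mapJD) \/
     th = fren (fneg psi') Z mapDE).
  assert (inj_Dp : inj {s & Dp s} nat).
  { exists (fun p : {s & Dp s} => pos_of F (existT (fun s => (D s + E s)%type) (projT1 p) (inl (proj1_sig (projT2 p : Dp (projT1 p)))))).
    intros [s [x h]] [s' [x' h']] Ep'. simpl in Ep'. apply pos_of_inj in Ep'; auto.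
    apply existT_inl in Ep'. apply (exist_lift D (fun s x => In (existT (fun s => (D s + E s)%type) s (inl x)) F)). auto. }
  assert (inj_Ep : inj {s & Ep s} nat).
  { exists (fun p : {s & Ep s} => pos_of F (existT (fun s => (D s + E s)%type) (projT1 p) (inr (proj1_sig (projT2 p : Ep (projT1 p)))))).
    intros [s [x h]] [s' [x' h']] Ep'. simpl in Ep'. apply pos_of_inj in Ep'; auto.
    apply existT_inr in Ep'. apply (exist_lift E (fun s x => In (existT (fun s => (D s + E s)%type) s (inr x)) F)). auto. }
  assert (Hsmall : small K {s & Z s}).
  { apply (small_of K _ I _ ((nn L I sI l + 0) + (1 + 0)) hK hI).
    eapply inj_trans. apply (inj_sigsum (Vv L I sI l W) (Bv L I sI Bx)). apply inj_add.
    - eapply inj_trans. apply (inj_sigsum (CV L I sI l) W). apply inj_add. apply inj_CV. apply inj_nat0, inj_Dp.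
    - eapply inj_trans. apply (inj_sigsum (JI L I sI) Bx). apply inj_add. apply inj_JI. apply inj_nat0, inj_Ep. }
  destruct (genchain L M K hsat hhom I sI hI a l W Bx bx Theta Hsmall (fneg (fand phi0 (fneg phi0)))) as [envV [Hch HTh]].
  - intro env. simpl. tauto.
  - intros phis HF2 Th0 HTh0.
    assert (Hs : exists s, prodF phis s /\ ~ A s).
    { apply NNPP; intro H'. apply Hn. exists phis. split; auto. intros s Hs. apply NNPP; intro HnA. apply H'; eauto. }
    destruct Hs as [s [Hs HnA]]. rewrite conv2 in Hs.
    destruct (chain_fwd L M I sI a _ _ _ (Qphi_inv L M I sI) _ s Hs) as [c [Hc Hcl]].
    assert (Hlen : length (combine l phis) = nn L I sI l).
    { rewrite length_combine. apply Forall2_length in HF2. rewrite <- HF2. unfold nn. lia. }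
    rewrite Hlen in Hcl.
    set (wenv := fun s0 (x : W s0) => af s (d s0 (proj1_sig x))).
    exists c, wenv. split; auto.
    set (ENV := envOf L M (Vv L I sI l W) (Bv L I sI Bx) (bB L M I sI a Bx bx) (mkenv L M I sI l W c wenv)).
    intros th Hth. destruct (HTh0 th Hth) as [[chi [Hchi ->]]| ->].
    + apply (proj2 (sat_ren L M chi Z mapJD _)).
      replace (fun s0 x => ENV s0 (mapJD s0 x)) with (fun s0 u => af s (envad s0 u)).
      { rewrite sat_aut. exact Hchi. }
      apply functional_extensionality_dep; intro s0; apply functional_extensionality; intros [w|x]; [|reflexivity].
      destruct w as [i e0]. destruct e0.
      change (af s (a i) = ctup L M I sI a l W Bx bx (mkenv L M I sI l W c wenv) (nn L I sI l) i).
      rewrite Hk in *. rewrite ctup_mk by lia. rewrite Hcl. reflexivity.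
    + simpl. intro H1. apply (proj1 (sat_ren L M _ _ _ _)) in H1. apply HnA. apply HAs.
      replace (envs s) with (fun s0 x => ENV s0 (mapDE s0 x)); auto.
      apply functional_extensionality_dep; intro s0; apply functional_extensionality; intros [x|y]; reflexivity.
  - assert (HsJD : small K {s & JD s}).
    { apply (small_of K _ I _ (1 + 0) hK hI).
      eapply inj_trans. apply (inj_sigsum (JI L I sI) Dp). apply inj_add. apply inj_JI. apply inj_nat0, inj_Dp. }
    set (ENV := envOf L M (Vv L I sI l W) (Bv L I sI Bx) (bB L M I sI a Bx bx) envV).
    destruct (hhom JD HsJD envad (fun s u => ENV s (mapJD s u))) as [g Hg].
    { intro chi. split; intro H1.
      - assert (H2 : Theta (fren chi Z mapJD)) by (left; eauto). apply HTh in H2. apply (proj1 (sat_ren L M _ _ _ _)) in H2. exact H2.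
      - apply NNPP; intro H3.
        assert (H2 : Theta (fren (fneg chi) Z mapJD)) by (left; exists (fneg chi); simpl; auto).
        apply HTh in H2. simpl in H2. apply H2. apply (proj2 (sat_ren L M _ _ _ _)). exact H1. }
    assert (Hcn : ctup L M I sI a l W Bx bx envV (length l) = gt L M I sI g a).
    { apply functional_extensionality_dep; intro i. specialize (Hg (sI i) (inl (exist _ i eq_refl))).
      simpl in Hg. symmetry. exact Hg. }
    pose proof (chain_bwd L M I sI a _ _ _ (Qpi_inv L M I sI) l Hne g _ Hch Hcn) as Hg'.
    rewrite <- conv1 in Hg'. apply Hsub in Hg'. apply HAs in Hg'.
    assert (H2 : Theta (fren (fneg psi') Z mapDE)) by (right; auto).
    apply HTh in H2. simpl in H2. apply H2. apply (proj2 (sat_ren L M _ _ _ _)).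
    refine (eq_ind _ (fun e0 => sat psi' e0) Hg' _ _).
    apply functional_extensionality_dep; intro s0; apply functional_extensionality; intros [x|y]; [|reflexivity].
    simpl. specialize (Hg s0 (inr x)). simpl in Hg. exact Hg.
Qed.
End Main.

Theorem corollary5p8
  (L : language) (M : structure L) (K : Type)
  (* kappa = |K| is larger than |T| *)
  (hK : small K (sort L + fsym L + rsym L + nat)%type)
  (hsat : saturated M K) (hhom : strongly_homogeneous M K)
  (* short tuples xbar, ybar of the same length and sorts, and the tuple a *)
  (I : Type) (sI : I -> sort L) (hI : small K I)
  (a : forall i : I, carrier M (sI i))
  (* the partial types pi_1..pi_n with signs eps_1..eps_n *)
  (l : list ((formula (XY sI) -> Prop) * bool)) :
  (forall sigma : aut M,
     aset_prod (map (fun p => (A_type a (fst p), snd p)) l) sigma <->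
     (forall phis : list (formula (XY sI)),
        Forall2 (fun p phi => entails M (fst p) phi) l phis ->
        aset_prod (map (fun q => (A_form a (snd q), snd (fst q))) (combine l phis))
          sigma))
  /\
  (forall A : autset M, rel_definable A ->
     (forall sigma, aset_prod (map (fun p => (A_type a (fst p), snd p)) l) sigma ->
                    A sigma) ->
     exists phis : list (formula (XY sI)),
       Forall2 (fun p phi => entails M (fst p) phi) l phis /\
       (forall sigma,
          aset_prod (map (fun q => (A_form a (snd q), snd (fst q))) (combine l phis))
            sigma -> A sigma)).
Proof.
  destruct (classic (l = [])) as [->|Hne].
  - split.
    + intro s. simpl. split.
      * intros H phis HF. inversion HF; subst. simpl. exact H.
      * intro H. apply (H []). constructor.
    + intros A _ Hsub. exists []. split; [constructor|]. intros s Hs. apply Hsub. exact Hs.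
  - split.
    + intro s. split.
      * intros H phis HF. exact (mono L M I sI a l phis HF s H).
      * exact (part_i_bwd L M K hK hsat hhom I sI hI a l Hne s).
    + intros A HA Hsub. exact (part_ii L M K hK hsat hhom I sI hI a l Hne A HA Hsub).
Qed.
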